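(* Let $A\in\{\mathbb Z,\mathbb R\}$ and $\Delta_2=\mathrm{conv}(\mathbf 0,e_1,e_2)$. Up to $A$-unimodular transformations there is exactly one unbounded two-dimensional closed convex set $C\subset\mathbb R^2$ which is $A$-$\Delta_2$-free and inclusion-maximal among $A$-$\Delta_2$-free closed convex sets, namely $C=[-1,1]\times\mathbb R$ if $A=\mathbb Z$ and $C=[0,1]\times\mathbb R$ if $A=\mathbb R$. In particular its lattice width is $2$ if $A=\mathbb Z$ and $1$ if $A=\mathbb R$.
   Context: An $A$-unimodular transformation is a map $T(x)=Mx+b$ with $M\in \mathrm{GL}_2(\mathbb Z)$ and $b\in A^2$; an $A$-unimodular copy of $X$ is $T(X)$. A convex set is $A$-$X$-free if its relative interior contains no $A$-unimodular copy of $X$. Lattice width: $\mathrm{width}(K)=\inf_{u\in(\mathbb Z^2)^*\setminus\{0\}}\sup_{x,y\in K}|u(x)-u(y)|$. *)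

(* Defs.v *)
From Stdlib Require Import Reals ZArith.
From Coquelicot Require Import Coquelicot.
Open Scope R_scope.

Definition pt := (R * R)%type.
Definition pset := pt -> Prop.

Definition padd (p q : pt) : pt := (fst p + fst q, snd p + snd q).
Definition pscale (t : R) (p : pt) : pt := (t * fst p, t * snd p).
Definition dist2 (p q : pt) : R :=
  sqrt ((fst p - fst q)^2 + (snd p - snd q)^2).

Definition set_sub (X Y : pset) : Prop := forall p, X p -> Y p.
Definition set_eq (X Y : pset) : Prop := forall p, X p <-> Y p.

Inductive coeffs := AZ | AR.
Definition in_A (A : coeffs) (x : R) : Prop :=
  match A with AZ => exists z : Z, x = IZR z | AR => True end.

Definition is_int (x : R) : Prop := exists z : Z, x = IZR z.

Record unimod := { m11 : Z; m12 : Z; m21 : Z; m22 : Z; b1 : R; b2 : R }.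
Definition is_unimod (A : coeffs) (T : unimod) : Prop :=
  (m11 T * m22 T - m12 T * m21 T = 1 \/ m11 T * m22 T - m12 T * m21 T = -1)%Z
  /\ in_A A (b1 T) /\ in_A A (b2 T).
Definition apply_unimod (T : unimod) (p : pt) : pt :=
  (IZR (m11 T) * fst p + IZR (m12 T) * snd p + b1 T,
   IZR (m21 T) * fst p + IZR (m22 T) * snd p + b2 T).
Definition image (T : unimod) (X : pset) : pset :=
  fun q => exists p, X p /\ q = apply_unimod T p.

Definition Delta2 : pset := fun p =>
  exists l0 l1 l2 : R, 0 <= l0 /\ 0 <= l1 /\ 0 <= l2 /\ l0 + l1 + l2 = 1 /\
    p = padd (padd (pscale l0 (0,0)) (pscale l1 (1,0))) (pscale l2 (0,1)).

Definition convex (K : pset) : Prop :=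
  forall x y t, K x -> K y -> 0 <= t <= 1 ->
    K (padd (pscale (1 - t) x) (pscale t y)).

Definition closed_set (K : pset) : Prop :=
  forall p, ~ K p -> exists eps, 0 < eps /\ forall q, dist2 p q < eps -> ~ K q.

Definition affine_set (S : pset) : Prop :=
  forall x y t, S x -> S y -> S (padd (pscale (1 - t) x) (pscale t y)).
Definition aff (K : pset) : pset :=
  fun p => forall S, affine_set S -> set_sub K S -> S p.

Definition relint (K : pset) : pset := fun x =>
  K x /\ exists eps, 0 < eps /\ forall y, aff K y -> dist2 x y < eps -> K y.

Definition free (A : coeffs) (X K : pset) : Prop :=
  ~ exists T, is_unimod A T /\ set_sub (image T X) (relint K).

Definition closed_convex (K : pset) : Prop := closed_set K /\ convex K.

Definition maximal_free (A : coeffs) (X C : pset) : Prop :=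
  closed_convex C /\ free A X C /\
  forall K, closed_convex K -> free A X K -> set_sub C K -> set_sub K C.

Definition unbounded (K : pset) : Prop :=
  ~ exists M, forall p, K p -> Rabs (fst p) <= M /\ Rabs (snd p) <= M.

Definition two_dim (K : pset) : Prop :=
  exists a b c, K a /\ K b /\ K c /\
    (fst b - fst a) * (snd c - snd a) - (snd b - snd a) * (fst c - fst a) <> 0.

Definition lin_spread (K : pset) (u1 u2 : R) : Rbar :=
  Rbar_lub (fun r => exists x y, K x /\ K y /\
    r = Finite (Rabs ((u1 * fst x + u2 * snd x) - (u1 * fst y + u2 * snd y)))).
Definition lattice_width (K : pset) : Rbar :=
  Rbar_glb (fun w => exists u1 u2, is_int u1 /\ is_int u2 /\
    ~ (u1 = 0 /\ u2 = 0) /\ w = lin_spread K u1 u2).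

Definition strip (A : coeffs) : pset := fun p =>
  match A with
  | AZ => -1 <= fst p <= 1
  | AR => 0 <= fst p <= 1
  end.
Definition strip_width (A : coeffs) : R :=
  match A with AZ => 2 | AR => 1 end.

(* Main.v *)
From Pilot Require Import Defs.
From Stdlib Require Import Reals ZArith Lra Lia Psatz Classical FunctionalExtensionality PropExtensionality.
From Coquelicot Require Import Coquelicot.
Import Pilot.Defs.
Open Scope R_scope.

Definition inB (x : pt) (rho : R) (y : pt) : Prop :=
  Rabs (fst y - fst x) < rho /\ Rabs (snd y - snd x) < rho.
Definition Box (K : pset) (x : pt) (rho : R) : Prop :=
  0 < rho /\ forall y, inB x rho y -> K y.

Lemma sqrt_ge_abs1 a b : Rabs a <= sqrt (a^2 + b^2).
Proof.
  rewrite <- sqrt_Rsqr_abs. apply sqrt_le_1_alt. unfold Rsqr. nra.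
Qed.

Lemma sqrt_le_sum a b : sqrt (a^2 + b^2) <= Rabs a + Rabs b.
Proof.
  rewrite <- (sqrt_Rsqr (Rabs a + Rabs b)).
  2:{ pose proof (Rabs_pos a); pose proof (Rabs_pos b); lra. }
  apply sqrt_le_1_alt. unfold Rsqr.
  rewrite <- (pow2_abs a), <- (pow2_abs b).
  pose proof (Rabs_pos a); pose proof (Rabs_pos b); nra.
Qed.

Lemma dist_coord p q e : dist2 p q < e ->
  Rabs (fst q - fst p) < e /\ Rabs (snd q - snd p) < e.
Proof.
  unfold dist2; intros H.
  pose proof (sqrt_ge_abs1 (fst p - fst q) (snd p - snd q)).
  pose proof (sqrt_ge_abs1 (snd p - snd q) (fst p - fst q)).
  rewrite Rplus_comm in H1.
  rewrite (Rabs_minus_sym (fst q)), (Rabs_minus_sym (snd q)). lra.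
Qed.

Lemma coord_dist p q e : Rabs (fst q - fst p) + Rabs (snd q - snd p) < e ->
  dist2 p q < e.
Proof.
  unfold dist2; intros H.
  pose proof (sqrt_le_sum (fst p - fst q) (snd p - snd q)).
  rewrite (Rabs_minus_sym (fst q)), (Rabs_minus_sym (snd q)) in H. lra.
Qed.

Lemma Box_relint K x rho : Box K x rho -> relint K x.
Proof.
  intros [Hr HB]. split.
  - apply HB. unfold inB. rewrite !Rminus_diag, Rabs_R0. lra.
  - exists rho. split; auto. intros y _ Hd. apply HB.
    apply dist_coord in Hd. unfold inB; tauto.
Qed.

Lemma ball_Box K x e : 0 < e -> (forall y, dist2 x y < e -> K y) -> Box K x (e/2).
Proof.
  intros He H. split. lra. intros y [H1 H2]. apply H. apply coord_dist. lra.
Qed.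

Lemma Box_mono K x r1 r2 : 0 < r1 -> r1 <= r2 -> Box K x r2 -> Box K x r1.
Proof.
  intros H0 H [_ HB]. split; auto. intros y [H1 H2]. apply HB. split; lra.
Qed.

Lemma Box_self K x r : Box K x r -> K x.
Proof. intros [Hr HB]. apply HB. unfold inB. rewrite !Rminus_diag, Rabs_R0. lra. Qed.

Lemma cc_eq t (x y : pt) :
  padd (pscale (1 - t) x) (pscale t y) =
  ((1-t) * fst x + t * fst y, (1-t) * snd x + t * snd y).
Proof. reflexivity. Qed.

Lemma convexP K : convex K -> forall x1 x2 y1 y2 t, K (x1,x2) -> K (y1,y2) -> 0 <= t <= 1 ->
  K ((1-t)*x1 + t*y1, (1-t)*x2 + t*y2).
Proof. intros HK x1 x2 y1 y2 t Hx Hy Ht. exact (HK _ _ t Hx Hy Ht). Qed.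

Lemma convexE K : convex K -> forall x y z t, K x -> K y -> 0 <= t <= 1 ->
  z = ((1-t)*fst x + t*fst y, (1-t)*snd x + t*snd y) -> K z.
Proof. intros HK x y z t Hx Hy Ht ->. exact (HK _ _ t Hx Hy Ht). Qed.

Lemma conv3 K : convex K -> forall x y z l0 l1 l2,
  0 <= l0 -> 0 <= l1 -> 0 <= l2 -> l0 + l1 + l2 = 1 ->
  K x -> K y -> K z ->
  K (l0 * fst x + l1 * fst y + l2 * fst z, l0 * snd x + l1 * snd y + l2 * snd z).
Proof.
  intros HK x y z l0 l1 l2 H0 H1 H2 Hs Hx Hy Hz.
  destruct (Req_dec (l1 + l2) 0) as [E|E].
  - assert (l1 = 0) by lra. assert (l2 = 0) by lra. subst.
    assert (l0 = 1) by lra. subst.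
    replace (1 * fst x + 0 * fst y + 0 * fst z, 1 * snd x + 0 * snd y + 0 * snd z) with x.
    exact Hx. destruct x; simpl; f_equal; ring.
  - set (w := ((l1 * fst y + l2 * fst z)/(l1+l2), (l1 * snd y + l2 * snd z)/(l1+l2))).
    assert (Hw : K w).
    { apply (convexE K HK y z w (l2/(l1+l2))); auto.
      split. apply Rdiv_le_0_compat; lra. apply Rmult_le_reg_r with (l1+l2). lra.
      unfold Rdiv. rewrite Rmult_assoc, Rinv_l; lra.
      unfold w; f_equal; field; lra. }
    apply (convexE K HK x w _ (l1+l2)); auto. lra.
    replace l0 with (1 - l1 - l2) by lra.
    unfold w; simpl; f_equal; field; lra.
Qed.

Lemma BoxComb2 K : convex K -> forall x y r1 r2 t,
  Box K x r1 -> Box K y r2 -> 0 <= t <= 1 ->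
  Box K ((1-t)*fst x + t*fst y, (1-t)*snd x + t*snd y) (Rmin r1 r2).
Proof.
  intros HK x y r1 r2 t [Hr1 B1] [Hr2 B2] Ht. split. apply Rmin_pos; auto.
  intros z [Hz1 Hz2]; simpl in *.
  pose proof (Rmin_l r1 r2); pose proof (Rmin_r r1 r2).
  set (d1 := fst z - ((1 - t) * fst x + t * fst y)) in *.
  set (d2 := snd z - ((1 - t) * snd x + t * snd y)) in *.
  apply (convexE K HK (fst x + d1, snd x + d2) (fst y + d1, snd y + d2) z t); auto.
  - apply B1. unfold inB; simpl. split; ring_simplify (fst x + d1 - fst x); ring_simplify (snd x + d2 - snd x); lra.
  - apply B2. unfold inB; simpl. split; ring_simplify (fst y + d1 - fst y); ring_simplify (snd y + d2 - snd y); lra.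
  - destruct z; simpl in *; unfold d1, d2; simpl; f_equal; ring.
Qed.

Lemma BoxComb3 K : convex K -> forall x y z r l0 l1 l2,
  0 <= l0 -> 0 <= l1 -> 0 <= l2 -> l0 + l1 + l2 = 1 ->
  Box K x r -> Box K y r -> Box K z r ->
  Box K (l0 * fst x + l1 * fst y + l2 * fst z, l0 * snd x + l1 * snd y + l2 * snd z) r.
Proof.
  intros HK x y z r l0 l1 l2 H0 H1 H2 Hs [Hr Bx] [_ By] [_ Bz]. split; auto.
  intros w [Hw1 Hw2]; simpl in *.
  set (d1 := fst w - (l0 * fst x + l1 * fst y + l2 * fst z)) in *.
  set (d2 := snd w - (l0 * snd x + l1 * snd y + l2 * snd z)) in *.
  assert (E : w = (l0 * fst (fst x + d1, snd x + d2) + l1 * fst (fst y + d1, snd y + d2) + l2 * fst (fst z + d1, snd z + d2),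
                   l0 * snd (fst x + d1, snd x + d2) + l1 * snd (fst y + d1, snd y + d2) + l2 * snd (fst z + d1, snd z + d2))).
  { destruct w; simpl in *; unfold d1, d2; simpl; f_equal; nra. }
  rewrite E. apply conv3; auto.
  - apply Bx. unfold inB; simpl. split; ring_simplify (fst x + d1 - fst x); ring_simplify (snd x + d2 - snd x); lra.
  - apply By. unfold inB; simpl. split; ring_simplify (fst y + d1 - fst y); ring_simplify (snd y + d2 - snd y); lra.
  - apply Bz. unfold inB; simpl. split; ring_simplify (fst z + d1 - fst z); ring_simplify (snd z + d2 - snd z); lra.
Qed.

Lemma BoxMix K : convex K -> forall s p rho mu,
  Box K s rho -> K p -> 0 < mu <= 1 ->
  Box K (mu * fst s + (1-mu) * fst p, mu * snd s + (1-mu) * snd p) (mu * rho).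
Proof.
  intros HK s p rho mu [Hr B] Hp Hmu. split. nra.
  intros y [Hy1 Hy2]; simpl in *.
  set (s' := (fst s + (fst y - (mu * fst s + (1 - mu) * fst p))/mu,
              snd s + (snd y - (mu * snd s + (1 - mu) * snd p))/mu)).
  apply (convexE K HK s' p y (1-mu)); auto. 2: lra.
  - apply B. unfold inB, s'; simpl.
    replace (fst s + (fst y - (mu * fst s + (1 - mu) * fst p)) / mu - fst s)
      with ((fst y - (mu * fst s + (1 - mu) * fst p)) / mu) by ring.
    replace (snd s + (snd y - (mu * snd s + (1 - mu) * snd p)) / mu - snd s)
      with ((snd y - (mu * snd s + (1 - mu) * snd p)) / mu) by ring.
    unfold Rdiv. rewrite !Rabs_mult, !Rabs_inv, (Rabs_right mu) by lra.
    split; apply Rmult_lt_reg_r with mu; try lra; rewrite Rmult_assoc, Rinv_l; lra.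
  - unfold s'; destruct y; simpl; f_equal; field; lra.
Qed.
Definition detZ (T:unimod) := (m11 T * m22 T - m12 T * m21 T)%Z.
Definition dR T := IZR (detZ T).
Lemma dR_eq T : dR T = IZR (m11 T) * IZR (m22 T) - IZR (m12 T) * IZR (m21 T).
Proof. unfold dR, detZ. rewrite minus_IZR, !mult_IZR. ring. Qed.
Lemma dR_sq A T : is_unimod A T -> dR T * dR T = 1.
Proof. intros [[H|H] _]; unfold dR, detZ; rewrite H; simpl; lra. Qed.

Definition ellT T (q:pt) := dR T * (IZR (m22 T) * (fst q - b1 T) - IZR (m12 T) * (snd q - b2 T)).
Definition kapT T (q:pt) := dR T * (- IZR (m21 T) * (fst q - b1 T) + IZR (m11 T) * (snd q - b2 T)).

Lemma ell_apply T p : dR T * dR T = 1 -> ellT T (apply_unimod T p) = fst p.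
Proof.
  intros Hd. unfold ellT, apply_unimod; cbn [fst snd].
  transitivity (dR T * dR T * fst p). rewrite (dR_eq T) at 2. ring. rewrite Hd; ring.
Qed.
Lemma kap_apply T p : dR T * dR T = 1 -> kapT T (apply_unimod T p) = snd p.
Proof.
  intros Hd. unfold kapT, apply_unimod; cbn [fst snd].
  transitivity (dR T * dR T * snd p). rewrite (dR_eq T) at 2. ring. rewrite Hd; ring.
Qed.
Lemma apply_ellkap T q : dR T * dR T = 1 -> apply_unimod T (ellT T q, kapT T q) = q.
Proof.
  intros Hd. destruct q as [q1 q2]. unfold ellT, kapT, apply_unimod; cbn [fst snd].
  f_equal.
  - transitivity (dR T * (IZR (m11 T) * IZR (m22 T) - IZR (m12 T) * IZR (m21 T)) * (q1 - b1 T) + b1 T). ring.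
    rewrite <- dR_eq, Hd; ring.
  - transitivity (dR T * (IZR (m11 T) * IZR (m22 T) - IZR (m12 T) * IZR (m21 T)) * (q2 - b2 T) + b2 T). ring.
    rewrite <- dR_eq, Hd; ring.
Qed.
Lemma image_iff T X q : dR T * dR T = 1 -> (image T X q <-> X (ellT T q, kapT T q)).
Proof.
  intros Hd. split.
  - intros [p [Hp ->]]. rewrite ell_apply, kap_apply by auto. destruct p; exact Hp.
  - intros H. exists (ellT T q, kapT T q). split; auto. rewrite apply_ellkap; auto.
Qed.

Definition lo A := match A with AZ => -1 | AR => 0 end.
Definition hi (A : coeffs) := 1.
Lemma strip_iff A p : strip A p <-> lo A <= fst p <= hi A.
Proof. destruct A; simpl; tauto. Qed.
Lemma imstrip_iff A T q : is_unimod A T -> (image T (strip A) q <-> lo A <= ellT T q <= hi A).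
Proof. intros HT. rewrite image_iff by (eapply dR_sq; eauto). rewrite strip_iff. simpl. tauto. Qed.

Definition freeV A K := ~ exists T rho, is_unimod A T /\
  Box K (apply_unimod T (0,0)) rho /\ Box K (apply_unimod T (1,0)) rho /\ Box K (apply_unimod T (0,1)) rho.

Lemma tri_relint K T rho : convex K ->
  Box K (apply_unimod T (0,0)) rho -> Box K (apply_unimod T (1,0)) rho -> Box K (apply_unimod T (0,1)) rho ->
  set_sub (image T Delta2) (relint K).
Proof.
  intros HK B0 B1 B2 q [p [[l0 [l1 [l2 [H0 [H1 [H2 [Hs ->]]]]]]] ->]].
  apply Box_relint with rho.
  pose proof (BoxComb3 K HK _ _ _ rho l0 l1 l2 H0 H1 H2 Hs B0 B1 B2) as B.
  match goal with |- Box K ?a rho => replace a with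
    (l0 * fst (apply_unimod T (0, 0)) + l1 * fst (apply_unimod T (1, 0)) + l2 * fst (apply_unimod T (0, 1)),
     l0 * snd (apply_unimod T (0, 0)) + l1 * snd (apply_unimod T (1, 0)) + l2 * snd (apply_unimod T (0, 1))) end.
  exact B.
  unfold apply_unimod, padd, pscale; simpl. replace l0 with (1 - l1 - l2) by lra. f_equal; ring.
Qed.

Lemma free_freeV A K : convex K -> free A Delta2 K -> freeV A K.
Proof.
  intros HK Hf [T [rho [HT [B0 [B1 B2]]]]]. apply Hf. exists T. split; auto.
  eapply tri_relint; eauto.
Qed.

Lemma aff_full K a b c : K a -> K b -> K c ->
  (fst b - fst a) * (snd c - snd a) - (snd b - snd a) * (fst c - fst a) <> 0 ->
  forall p, aff K p.
Proof.
  intros Ha Hb Hc Hdet p S HS Hsub.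
  set (D := (fst b - fst a) * (snd c - snd a) - (snd b - snd a) * (fst c - fst a)) in *.
  set (s := ((fst p - fst a) * (snd c - snd a) - (snd p - snd a) * (fst c - fst a)) / D).
  set (t := ((fst b - fst a) * (snd p - snd a) - (snd b - snd a) * (fst p - fst a)) / D).
  assert (HX : S (padd (pscale (1 - 2*s) a) (pscale (2*s) b))) by (apply HS; auto).
  assert (HY : S (padd (pscale (1 - 2*t) a) (pscale (2*t) c))) by (apply HS; auto).
  pose proof (HS _ _ (1/2) HX HY) as HZ.
  match goal with HZ : S ?z |- _ => replace p with z; auto end.
  destruct p as [p1 p2]; destruct a as [a1 a2]; destruct b as [b1' b2']; destruct c as [c1 c2].
  unfold padd, pscale, s, t, D in *; simpl in *. f_equal; field; auto.
Qed.

Lemma relint_Box K a b c x : K a -> K b -> K c ->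
  (fst b - fst a) * (snd c - snd a) - (snd b - snd a) * (fst c - fst a) <> 0 ->
  relint K x -> exists rho, Box K x rho.
Proof.
  intros Ha Hb Hc Hd [Hx [e [He H]]]. exists (e/2). apply ball_Box; auto.
  intros y Hy. apply H; auto. eapply aff_full; [exact Ha|exact Hb|exact Hc|exact Hd].
Qed.
Lemma abs_lin a b x y : Rabs (a * x + b * y) <= (Rabs a + Rabs b) * (Rabs x + Rabs y).
Proof.
  eapply Rle_trans. apply Rabs_triang. rewrite !Rabs_mult.
  pose proof (Rabs_pos a); pose proof (Rabs_pos b); pose proof (Rabs_pos x); pose proof (Rabs_pos y).
  nra.
Qed.

Lemma abs_D A T : is_unimod A T -> Rabs (dR T) = 1.
Proof.
  intros H. pose proof (dR_sq A T H) as Hd.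
  destruct (Rle_dec 0 (dR T)). rewrite Rabs_right by lra. nra. rewrite Rabs_left by lra. nra.
Qed.

Lemma ell_diff T q q' : ellT T q' - ellT T q =
  dR T * (IZR (m22 T) * (fst q' - fst q) + (- IZR (m12 T)) * (snd q' - snd q)).
Proof. unfold ellT; ring. Qed.

Lemma ell_lip A T q q' : is_unimod A T ->
  Rabs (ellT T q' - ellT T q) <= (Rabs (IZR (m22 T)) + Rabs (IZR (m12 T))) * (Rabs (fst q' - fst q) + Rabs (snd q' - snd q)).
Proof.
  intros H. rewrite ell_diff, Rabs_mult, (abs_D A T H), Rmult_1_l.
  rewrite <- (Rabs_Ropp (IZR (m12 T))). apply abs_lin.
Qed.

Lemma ell_aff T x y a : ellT T ((1-a) * fst x + a * fst y, (1-a) * snd x + a * snd y) =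
  (1-a) * ellT T x + a * ellT T y.
Proof. unfold ellT; simpl; ring. Qed.

Lemma IZR_nz_ge1 z : IZR z <> 0 -> 1 <= Rabs (IZR z).
Proof.
  intros H. assert (z <> 0%Z) by (intros ->; apply H; reflexivity).
  destruct (Z_lt_le_dec z 0).
  - rewrite Rabs_left. assert (z <= -1)%Z by lia. apply IZR_le in H1. simpl in H1. lra.
    apply IZR_lt in l; simpl in l; lra.
  - assert (1 <= z)%Z by lia. apply IZR_le in H1. rewrite Rabs_right; simpl in *; lra.
Qed.

Lemma IZR_unit z : -1 < IZR z < 1 -> z = 0%Z.
Proof. intros [H1 H2]. apply lt_IZR in H1. apply lt_IZR in H2. lia. Qed.

Lemma lo_hi0 A : lo A + 1 <= hi A /\ lo A <= 0 /\ 1 <= hi A.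
Proof. destruct A; unfold lo, hi; lra. Qed.

Section Strip.
Variable A : coeffs.
Variable T : unimod.
Hypothesis HT : is_unimod A T.
Let Lst := image T (strip A).
Let Hd := dR_sq A T HT.
Let LL := Rabs (IZR (m22 T)) + Rabs (IZR (m12 T)) + 1.
Lemma LL_pos : 1 <= LL.
Proof. unfold LL. pose proof (Rabs_pos (IZR (m22 T))); pose proof (Rabs_pos (IZR (m12 T))). lra. Qed.

Lemma ell_near q q' e : 0 < e -> Rabs (fst q' - fst q) < e / (2 * LL) -> Rabs (snd q' - snd q) < e / (2 * LL) ->
  Rabs (ellT T q' - ellT T q) < e.
Proof.
  intros He H1 H2. pose proof (ell_lip A T q q' HT). pose proof LL_pos.
  assert (Hs : Rabs (fst q' - fst q) + Rabs (snd q' - snd q) < e / LL).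
  { replace (e / LL) with (e / (2 * LL) + e / (2*LL)) by (field; lra). lra. }
  assert (Rabs (IZR (m22 T)) + Rabs (IZR (m12 T)) = LL - 1) by (unfold LL; ring).
  rewrite H3 in H.
  pose proof (Rabs_pos (fst q' - fst q)); pose proof (Rabs_pos (snd q' - snd q)).
  assert ((LL - 1) * (Rabs (fst q' - fst q) + Rabs (snd q' - snd q)) <= (LL - 1) * (e / LL)).
  { apply Rmult_le_compat_l; lra. }
  assert ((LL - 1) * (e / LL) < e). { replace e with (LL * (e / LL)) at 2 by (field; lra).
    apply Rmult_lt_compat_r. apply Rdiv_lt_0_compat; lra. lra. }
  lra.
Qed.

Lemma L_closed : closed_set Lst.
Proof.
  unfold Lst. intros q Hq. rewrite (imstrip_iff A T q HT) in Hq. pose proof LL_pos.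
  assert (Hg : exists e, 0 < e /\ (ellT T q + e < lo A \/ hi A < ellT T q - e)).
  { destruct (Rlt_dec (ellT T q) (lo A)).
    exists ((lo A - ellT T q)/2). split; lra.
    exists ((ellT T q - hi A)/2). split; lra. }
  destruct Hg as [e [He Hg]].
  exists (e / (2 * LL)). split. apply Rdiv_lt_0_compat; lra.
  intros q' Hq' Hin. apply dist_coord in Hq'. destruct Hq' as [H1 H2].
  pose proof (ell_near q q' e He H1 H2). rewrite (imstrip_iff A T q' HT) in Hin.
  apply Rabs_def2 in H0. lra.
Qed.

Lemma L_convex : convex Lst.
Proof.
  unfold Lst. intros x y t Hx Hy Ht. rewrite (imstrip_iff A T x HT) in Hx. rewrite (imstrip_iff A T y HT) in Hy.
  rewrite (imstrip_iff A T _ HT). rewrite cc_eq, ell_aff. nra.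
Qed.

Lemma L_pts u : lo A <= fst u <= hi A -> Lst (apply_unimod T u).
Proof. intros H. unfold Lst. rewrite (imstrip_iff A T _ HT), ell_apply; auto. Qed.

Lemma lo_hi : lo A + 1 <= hi A /\ lo A <= 0 /\ 1 <= hi A.
Proof. apply lo_hi0. Qed.

Lemma dR_nz : dR T <> 0.
Proof. intros E. pose proof Hd. rewrite E in H. lra. Qed.

Lemma L_two_dim : two_dim Lst.
Proof.
  pose proof lo_hi. exists (apply_unimod T (0,0)), (apply_unimod T (1,0)), (apply_unimod T (0,1)).
  repeat split; try (apply L_pts; simpl; lra).
  unfold apply_unimod; simpl. intros E. apply dR_nz. rewrite dR_eq. lra.
Qed.

Lemma L_unbounded : unbounded Lst.
Proof.
  intros [M HM]. pose proof lo_hi.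
  set (y := Rabs M + Rabs (b1 T) + Rabs (b2 T) + 1).
  destruct (HM (apply_unimod T (0, y))) as [H1 H2]. apply L_pts; simpl; lra.
  unfold apply_unimod in H1, H2; simpl in H1, H2.
  assert (Hy : 0 < y) by (unfold y; pose proof (Rabs_pos M); pose proof (Rabs_pos (b1 T)); pose proof (Rabs_pos (b2 T)); lra).
  pose proof (Rle_abs M).
  destruct (Req_dec (IZR (m12 T)) 0) as [E|E].
  - assert (E2 : IZR (m22 T) <> 0). { intros E2. apply dR_nz. rewrite dR_eq, E, E2. ring. }
    apply IZR_nz_ge1 in E2.
    replace (IZR (m21 T) * 0 + IZR (m22 T) * y + b2 T) with (IZR (m22 T) * y + b2 T) in H2 by ring.
    pose proof (Rabs_triang_inv (IZR (m22 T) * y) (- b2 T)). rewrite Rabs_Ropp in H3.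
    replace (IZR (m22 T) * y - - b2 T) with (IZR (m22 T) * y + b2 T) in H3 by ring.
    rewrite Rabs_mult, (Rabs_right y) in H3 by lra. unfold y in *.
    pose proof (Rabs_pos (b1 T)). nra.
  - apply IZR_nz_ge1 in E.
    replace (IZR (m11 T) * 0 + IZR (m12 T) * y + b1 T) with (IZR (m12 T) * y + b1 T) in H1 by ring.
    pose proof (Rabs_triang_inv (IZR (m12 T) * y) (- b1 T)). rewrite Rabs_Ropp in H3.
    replace (IZR (m12 T) * y - - b1 T) with (IZR (m12 T) * y + b1 T) in H3 by ring.
    rewrite Rabs_mult, (Rabs_right y) in H3 by lra. unfold y in *.
    pose proof (Rabs_pos (b2 T)). nra.
Qed.

Lemma apply_shift u1 u2 g : apply_unimod T (u1 + g, u2) =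
  (fst (apply_unimod T (u1,u2)) + g * IZR (m11 T), snd (apply_unimod T (u1,u2)) + g * IZR (m21 T)).
Proof. unfold apply_unimod; simpl; f_equal; ring. Qed.

Lemma Box_slab K x rho : set_sub K Lst -> Box K x rho -> lo A < ellT T x < hi A.
Proof.
  intros Hs [Hr HB].
  set (W := Rabs (IZR (m11 T)) + Rabs (IZR (m21 T)) + 1).
  assert (HW : 1 <= W) by (unfold W; pose proof (Rabs_pos (IZR (m11 T))); pose proof (Rabs_pos (IZR (m21 T))); lra).
  set (eta := rho / (2 * W)).
  assert (He : 0 < eta) by (unfold eta; apply Rdiv_lt_0_compat; lra).
  assert (Hsm : forall m : R, Rabs m <= W -> eta * Rabs m < rho).
  { intros m Hm. unfold eta.
    apply Rle_lt_trans with (rho / (2*W) * W). apply Rmult_le_compat_l; [|lra].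
    apply Rlt_le, Rdiv_lt_0_compat; lra.
    replace (rho / (2 * W) * W) with (rho/2) by (field; lra). lra. }
  assert (Hm1 : Rabs (IZR (m11 T)) <= W) by (unfold W; pose proof (Rabs_pos (IZR (m21 T))); lra).
  assert (Hm2 : Rabs (IZR (m21 T)) <= W) by (unfold W; pose proof (Rabs_pos (IZR (m11 T))); lra).
  assert (Hx : x = apply_unimod T (ellT T x, kapT T x)) by (rewrite apply_ellkap; auto).
  assert (Hp : forall g, Rabs g = eta -> lo A <= ellT T x + g <= hi A).
  { intros g Hg. pose proof (HB (apply_unimod T (ellT T x + g, kapT T x))) as HK.
    assert (Hin : inB x rho (apply_unimod T (ellT T x + g, kapT T x))).
    { rewrite (apply_shift (ellT T x) (kapT T x) g). rewrite <- Hx. unfold inB; simpl.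
      replace (fst x + g * IZR (m11 T) - fst x) with (g * IZR (m11 T)) by ring.
      replace (snd x + g * IZR (m21 T) - snd x) with (g * IZR (m21 T)) by ring.
      rewrite !Rabs_mult, Hg. split; apply Hsm; auto. }
    specialize (HK Hin). apply Hs in HK. unfold Lst in HK. rewrite (imstrip_iff A T _ HT), ell_apply in HK; auto. }
  pose proof (Hp eta (Rabs_right eta ltac:(lra))).
  assert (Rabs (- eta) = eta) by (rewrite Rabs_Ropp, Rabs_right; lra).
  pose proof (Hp (-eta) H0). lra.
Qed.

Lemma slab_Box q : lo A < ellT T q < hi A -> exists rho, Box Lst q rho.
Proof.
  intros H. pose proof LL_pos.
  set (e := Rmin (ellT T q - lo A) (hi A - ellT T q)).
  assert (He : 0 < e) by (unfold e; apply Rmin_pos; lra).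
  exists (e / (2 * LL)). split. apply Rdiv_lt_0_compat; lra.
  intros y [H1 H2]. rewrite <- Rabs_Ropp in H1, H2.
  rewrite Ropp_minus_distr in H1, H2.
  pose proof (ell_near y q e He H1 H2). unfold Lst. rewrite (imstrip_iff A T _ HT).
  rewrite Rabs_minus_sym in H3. apply Rabs_def2 in H3.
  pose proof (Rmin_l (ellT T q - lo A) (hi A - ellT T q)).
  pose proof (Rmin_r (ellT T q - lo A) (hi A - ellT T q)). fold e in H4, H5. lra.
Qed.

End Strip.
Lemma Box_sub K1 K2 x rho : set_sub K1 K2 -> Box K1 x rho -> Box K2 x rho.
Proof. intros Hs [Hr HB]. split; auto. Qed.

Lemma ell_T' T T' u1 u2 : ellT T (apply_unimod T' (u1,u2)) = ellT T (apply_unimod T' (0,0))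
  + u1 * (dR T * (IZR (m22 T) * IZR (m11 T') - IZR (m12 T) * IZR (m21 T')))
  + u2 * (dR T * (IZR (m22 T) * IZR (m12 T') - IZR (m12 T) * IZR (m22 T'))).
Proof. unfold ellT, apply_unimod; cbn [fst snd]. ring. Qed.

Lemma Delta2_vert0 : Delta2 (0,0).
Proof. exists 1, 0, 0. unfold padd, pscale; simpl. repeat split; try lra. f_equal; ring. Qed.
Lemma Delta2_vert1 : Delta2 (1,0).
Proof. exists 0, 1, 0. unfold padd, pscale; simpl. repeat split; try lra. f_equal; ring. Qed.
Lemma Delta2_vert2 : Delta2 (0,1).
Proof. exists 0, 0, 1. unfold padd, pscale; simpl. repeat split; try lra. f_equal; ring. Qed.

Lemma nz_pair (a b c d a' b' c' d' : Z) : (a*d - b*c <> 0)%Z -> (a'*d' - b'*c' <> 0)%Z ->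
  (d * a' - b * c' = 0)%Z -> (d * b' - b * d' = 0)%Z -> False.
Proof.
  intros H1 H2 E1 E2.
  assert (Hd : (d * (a'*d' - b'*c') = 0)%Z).
  { replace (d * (a'*d' - b'*c'))%Z with ((d * a' - b * c') * d' - (d * b' - b * d') * c')%Z by ring.
    rewrite E1, E2; ring. }
  assert (Hb : (b * (a'*d' - b'*c') = 0)%Z).
  { replace (b * (a'*d' - b'*c'))%Z with ((d * a' - b * c') * b' - (d * b' - b * d') * a')%Z by ring.
    rewrite E1, E2; ring. }
  apply Z.mul_eq_0 in Hd. apply Z.mul_eq_0 in Hb.
  destruct Hd as [Hd|Hd]; [|tauto]. destruct Hb as [Hb|Hb]; [|tauto]. subst. lia.
Qed.

Lemma L_free A T : is_unimod A T -> free A Delta2 (image T (strip A)).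
Proof.
  intros HT [T' [HT' Hsub]].
  pose proof (L_two_dim A T HT) as [a [b [c [Ha [Hb [Hc Hdet]]]]]].
  assert (Hv : forall u, Delta2 u -> lo A < ellT T (apply_unimod T' u) < hi A).
  { intros u Hu. assert (Hr : relint (image T (strip A)) (apply_unimod T' u)).
    { apply Hsub. exists u; split; auto. }
    destruct (relint_Box _ a b c _ Ha Hb Hc Hdet Hr) as [rho Hrho].
    eapply Box_slab; eauto. intros x; auto. }
  pose proof (Hv _ Delta2_vert0) as V0. pose proof (Hv _ Delta2_vert1) as V1.
  pose proof (Hv _ Delta2_vert2) as V2.
  rewrite ell_T' in V1, V2.
  set (e0 := ellT T (apply_unimod T' (0, 0))) in *.
  set (al := (detZ T * (m22 T * m11 T' - m12 T * m21 T'))%Z).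
  set (be := (detZ T * (m22 T * m12 T' - m12 T * m22 T'))%Z).
  assert (Eal : IZR al = dR T * (IZR (m22 T) * IZR (m11 T') - IZR (m12 T) * IZR (m21 T'))).
  { unfold al, dR. rewrite mult_IZR, minus_IZR, !mult_IZR. ring. }
  assert (Ebe : IZR be = dR T * (IZR (m22 T) * IZR (m12 T') - IZR (m12 T) * IZR (m22 T'))).
  { unfold be, dR. rewrite mult_IZR, minus_IZR, !mult_IZR. ring. }
  rewrite <- Eal in V1. rewrite <- Ebe in V2.
  assert (Hnz : al = 0%Z -> be = 0%Z -> False).
  { intros E1 E2. destruct HT as [HdT _]. destruct HT' as [HdT' _].
    assert (HdZ : detZ T <> 0%Z) by (unfold detZ; lia).
    unfold al, be in *. apply Z.mul_eq_0 in E1. apply Z.mul_eq_0 in E2.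
    destruct E1 as [E1|E1]; [tauto|]. destruct E2 as [E2|E2]; [tauto|].
    apply (nz_pair (m11 T) (m12 T) (m21 T) (m22 T) (m11 T') (m12 T') (m21 T') (m22 T')); auto; lia. }
  destruct A.
  -
    destruct HT as [_ [[z1 Hz1] [z2 Hz2]]]. destruct HT' as [_ [[y1 Hy1] [y2 Hy2]]].
    assert (Ee0 : e0 = IZR (detZ T * (m22 T * (y1 - z1) - m12 T * (y2 - z2)))).
    { unfold e0, ellT, apply_unimod, dR; cbn [fst snd]. rewrite Hz1, Hz2, Hy1, Hy2.
      rewrite !mult_IZR, !minus_IZR, !mult_IZR, !minus_IZR. ring. }
    unfold lo, hi in V0, V1, V2.
    rewrite Ee0 in V0. apply IZR_unit in V0.
    assert (e0 = 0) by (rewrite Ee0, V0; reflexivity).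
    apply Hnz; apply IZR_unit; lra.
  - unfold lo, hi in V0, V1, V2. apply Hnz; apply IZR_unit; lra.
Qed.

Definition shiftT (T : unimod) (g : R) : unimod :=
  {| m11 := m11 T; m12 := m12 T; m21 := m21 T; m22 := m22 T;
     b1 := b1 T + g * IZR (m11 T); b2 := b2 T + g * IZR (m21 T) |}.

Lemma ell_shift A T g u1 u2 : is_unimod A T -> ellT T (apply_unimod (shiftT T g) (u1,u2)) = g + u1.
Proof.
  intros HT. replace (apply_unimod (shiftT T g) (u1,u2)) with (apply_unimod T (u1 + g, u2)).
  rewrite ell_apply. simpl; ring. eapply dR_sq; eauto.
  unfold apply_unimod, shiftT; simpl. f_equal; ring.
Qed.

Lemma shift_unimod A T g : is_unimod A T -> in_A A g -> is_unimod A (shiftT T g).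
Proof.
  intros [Hd [H1 H2]] Hg. split; [exact Hd|]. destruct A; simpl in *; auto.
  destruct H1 as [z1 E1]; destruct H2 as [z2 E2]; destruct Hg as [k Ek].
  split. exists (z1 + k * m11 T)%Z. rewrite plus_IZR, mult_IZR, E1, Ek; ring.
  exists (z2 + k * m21 T)%Z. rewrite plus_IZR, mult_IZR, E2, Ek; ring.
Qed.

Lemma slab_tri A T K a b g : is_unimod A T -> freeV A K ->
  (forall q, a < ellT T q < b -> exists rho, Box K q rho) ->
  in_A A g -> a < g -> g + 1 < b -> False.
Proof.
  intros HT Hf HO Hg H1 H2. apply Hf.
  destruct (HO (apply_unimod (shiftT T g) (0,0))) as [r0 B0]. rewrite (ell_shift A); auto; lra.
  destruct (HO (apply_unimod (shiftT T g) (1,0))) as [r1 B1]. rewrite (ell_shift A); auto; lra.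
  destruct (HO (apply_unimod (shiftT T g) (0,1))) as [r2 B2]. rewrite (ell_shift A); auto; lra.
  pose proof (proj1 B0); pose proof (proj1 B1); pose proof (proj1 B2).
  set (r := Rmin r0 (Rmin r1 r2)).
  assert (0 < r) by (unfold r; repeat apply Rmin_pos; auto).
  pose proof (Rmin_l r0 (Rmin r1 r2)). pose proof (Rmin_r r0 (Rmin r1 r2)).
  pose proof (Rmin_l r1 r2). pose proof (Rmin_r r1 r2). fold r in H6, H7.
  exists (shiftT T g), r. split. apply shift_unimod; auto.
  split; [|split]; [apply Box_mono with r0|apply Box_mono with r1|apply Box_mono with r2]; auto; lra.
Qed.

Lemma L_max A T : is_unimod A T -> forall K, closed_convex K -> free A Delta2 K ->
  set_sub (image T (strip A)) K -> set_sub K (image T (strip A)).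
Proof.
  intros HT K [HKc HKv] HKf Hs p Hp. apply NNPP. intros Hn.
  rewrite (imstrip_iff A T p HT) in Hn.
  pose proof (free_freeV A K HKv HKf) as Hf.
  pose proof (lo_hi0 A) as Hlh. set (mid := (lo A + hi A)/2).
  assert (Hsl : forall q, lo A < ellT T q < hi A -> exists rho, Box K q rho).
  { intros q Hq. destruct (slab_Box A T HT q Hq) as [rho Hr]. exists rho. eapply Box_sub; eauto. }
  assert (Hext : forall q lam, 0 <= lam < 1 -> ellT T q = (1-lam) * mid + lam * ellT T p ->
                 exists rho, Box K q rho).
  { intros q lam Hl Hq.
    set (a := - lam / (1 - lam)).
    set (s := ((1-a) * fst q + a * fst p, (1-a) * snd q + a * snd p)).
    assert (Es : ellT T s = mid).
    { unfold s. rewrite ell_aff, Hq. unfold a. field. lra. }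
    destruct (Hsl s) as [rho Hr]. rewrite Es. unfold mid. lra.
    exists ((1-lam) * rho).
    pose proof (BoxMix K HKv s p rho (1-lam) Hr Hp ltac:(lra)) as B.
    match goal with B : Box K ?z _ |- _ => replace q with z; auto end.
    unfold s, a; destruct q; simpl. f_equal; field; lra. }
  destruct (Rlt_dec (hi A) (ellT T p)) as [Hgt|Hle].
  - assert (HO : forall q, lo A < ellT T q < ellT T p -> exists rho, Box K q rho).
    { intros q Hq. destruct (Rlt_dec (ellT T q) (hi A)). apply Hsl; lra.
      apply (Hext q ((ellT T q - mid)/(ellT T p - mid))).
      unfold mid in *. split. apply Rdiv_le_0_compat; lra.
      apply Rmult_lt_reg_r with (ellT T p - (lo A + hi A) / 2). lra.
      unfold Rdiv at 1. rewrite Rmult_assoc, Rinv_l; lra.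
      field. unfold mid; lra. }
    destruct A.
    + apply (slab_tri AZ T K (lo AZ) (ellT T p) 0 HT Hf HO); [exists 0%Z; reflexivity| |];
      unfold lo, hi in *; lra.
    + apply (slab_tri AR T K (lo AR) (ellT T p) ((ellT T p - 1)/2) HT Hf HO); [exact I| |];
      unfold lo, hi in *; lra.
  - assert (Hlt : ellT T p < lo A) by lra.
    assert (HO : forall q, ellT T p < ellT T q < hi A -> exists rho, Box K q rho).
    { intros q Hq. destruct (Rlt_dec (lo A) (ellT T q)). apply Hsl; lra.
      apply (Hext q ((mid - ellT T q)/(mid - ellT T p))).
      unfold mid in *. split. apply Rdiv_le_0_compat; lra.
      apply Rmult_lt_reg_r with ((lo A + hi A) / 2 - ellT T p). lra.
      unfold Rdiv at 1. rewrite Rmult_assoc, Rinv_l; lra.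
      field. unfold mid; lra. }
    destruct A.
    + apply (slab_tri AZ T K (ellT T p) (hi AZ) (-1) HT Hf HO); [exists (-1)%Z; reflexivity| |];
      unfold lo, hi in *; lra.
    + apply (slab_tri AR T K (ellT T p) (hi AR) (ellT T p / 2) HT Hf HO); [exact I| |];
      unfold lo, hi in *; lra.
Qed.
Lemma lub_ub (E : Rbar -> Prop) x : E x -> Rbar_le x (Rbar_lub E).
Proof. intros H. unfold Rbar_lub. destruct (Rbar_ex_lub E) as [l Hl]. simpl. apply Hl; auto. Qed.

Lemma lin_apply T (u1 u2 : R) p : u1 * fst (apply_unimod T p) + u2 * snd (apply_unimod T p) =
  (u1 * IZR (m11 T) + u2 * IZR (m21 T)) * fst p + (u1 * IZR (m12 T) + u2 * IZR (m22 T)) * snd p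
  + (u1 * b1 T + u2 * b2 T).
Proof. unfold apply_unimod; simpl; ring. Qed.

Lemma sw_eq A : strip_width A = hi A - lo A.
Proof. destruct A; unfold strip_width, hi, lo; lra. Qed.

Lemma L_width A T : is_unimod A T -> lattice_width (image T (strip A)) = Finite (strip_width A).
Proof.
  intros HT. pose proof (lo_hi0 A) as Hlh. rewrite sw_eq.
  set (L := image T (strip A)).
  assert (HL : forall u, lo A <= fst u <= hi A -> L (apply_unimod T u)) by (intros; apply L_pts; auto).
  unfold lattice_width. apply Rbar_is_glb_unique. split.
  - intros w [u1 [u2 [[k1 E1] [[k2 E2] [Hnz ->]]]]].
    set (c1 := (k1 * m11 T + k2 * m21 T)%Z). set (c2 := (k1 * m12 T + k2 * m22 T)%Z).
    assert (Ec1 : IZR c1 = u1 * IZR (m11 T) + u2 * IZR (m21 T)) by (unfold c1; rewrite plus_IZR, !mult_IZR, E1, E2; ring).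
    assert (Ec2 : IZR c2 = u1 * IZR (m12 T) + u2 * IZR (m22 T)) by (unfold c2; rewrite plus_IZR, !mult_IZR, E1, E2; ring).
    assert (Hc : IZR c1 <> 0 \/ IZR c2 <> 0).
    { destruct (Req_dec (IZR c1) 0) as [Z1|Z1]; [|auto]. destruct (Req_dec (IZR c2) 0) as [Z2|Z2]; [|auto].
      exfalso. apply Hnz. apply eq_IZR in Z1. apply eq_IZR in Z2. unfold c1, c2 in *.
      destruct HT as [Hd _].
      assert (Ek1 : (k1 * (m11 T * m22 T - m12 T * m21 T) = 0)%Z).
      { replace (k1 * (m11 T * m22 T - m12 T * m21 T))%Z with
          ((k1 * m11 T + k2 * m21 T) * m22 T - (k1 * m12 T + k2 * m22 T) * m21 T)%Z by ring.
        rewrite Z1, Z2; ring. }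
      assert (Ek2 : (k2 * (m11 T * m22 T - m12 T * m21 T) = 0)%Z).
      { replace (k2 * (m11 T * m22 T - m12 T * m21 T))%Z with
          ((k1 * m12 T + k2 * m22 T) * m11 T - (k1 * m11 T + k2 * m21 T) * m12 T)%Z by ring.
        rewrite Z1, Z2; ring. }
      apply Z.mul_eq_0 in Ek1. apply Z.mul_eq_0 in Ek2.
      destruct Ek1 as [Ek1|Ek1]; [|lia]. destruct Ek2 as [Ek2|Ek2]; [|lia]. subst. simpl. lra. }
    set (sw := hi A - lo A).
    assert (Hel : exists x y, L x /\ L y /\ sw <= Rabs (u1 * fst x + u2 * snd x - (u1 * fst y + u2 * snd y))).
    { destruct Hc as [Hc|Hc].
      - exists (apply_unimod T (hi A, 0)), (apply_unimod T (lo A, 0)).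
        split. apply HL; simpl; lra. split. apply HL; simpl; lra.
        rewrite !lin_apply. simpl. rewrite <- Ec1, <- Ec2.
        replace (IZR c1 * hi A + IZR c2 * 0 + (u1 * b1 T + u2 * b2 T) -
                 (IZR c1 * lo A + IZR c2 * 0 + (u1 * b1 T + u2 * b2 T))) with (IZR c1 * sw) by (unfold sw; ring).
        rewrite Rabs_mult, (Rabs_right sw) by (unfold sw; lra). apply IZR_nz_ge1 in Hc.
        unfold sw in *; nra.
      - exists (apply_unimod T (0, sw)), (apply_unimod T (0, 0)).
        split. apply HL; simpl; lra. split. apply HL; simpl; lra.
        rewrite !lin_apply. simpl. rewrite <- Ec1, <- Ec2.
        replace (IZR c1 * 0 + IZR c2 * sw + (u1 * b1 T + u2 * b2 T) -
                 (IZR c1 * 0 + IZR c2 * 0 + (u1 * b1 T + u2 * b2 T))) with (IZR c2 * sw) by ring.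
        rewrite Rabs_mult, (Rabs_right sw) by (unfold sw; lra). apply IZR_nz_ge1 in Hc.
        unfold sw in *; nra. }
    destruct Hel as [x [y [Hx [Hy Hr]]]].
    eapply Rbar_le_trans; [|apply lub_ub; exists x, y; split; [exact Hx|split; [exact Hy|reflexivity]]].
    simpl. exact Hr.
  - intros b Hb. apply Hb.
    exists (dR T * IZR (m22 T)), (- (dR T * IZR (m12 T))).
    pose proof (dR_sq A T HT) as Hd.
    split. exists (detZ T * m22 T)%Z. unfold dR. rewrite mult_IZR; ring.
    split. exists (- (detZ T * m12 T))%Z. unfold dR. rewrite opp_IZR, mult_IZR; ring.
    split.
    { intros [Z1 Z2]. apply (dR_nz A T HT). rewrite dR_eq.
      assert (IZR (m22 T) = 0) by (apply Rmult_eq_reg_l with (dR T); [lra|]; intros E; rewrite E in Hd; lra).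
      assert (IZR (m12 T) = 0) by (apply Rmult_eq_reg_l with (dR T); [lra|]; intros E; rewrite E in Hd; lra).
      rewrite H, H0; ring. }
    symmetry. apply Rbar_is_lub_unique. split.
    + intros r [x [y [Hx [Hy ->]]]]. simpl.
      unfold L in Hx, Hy. rewrite (imstrip_iff A T _ HT) in Hx. rewrite (imstrip_iff A T _ HT) in Hy.
      replace (dR T * IZR (m22 T) * fst x + - (dR T * IZR (m12 T)) * snd x -
               (dR T * IZR (m22 T) * fst y + - (dR T * IZR (m12 T)) * snd y)) with (ellT T x - ellT T y)
        by (unfold ellT; ring).
      apply Rabs_le. lra.
    + intros b' Hb'. eapply Rbar_le_trans; [|apply Hb'].
      2:{ exists (apply_unimod T (hi A, 0)), (apply_unimod T (lo A, 0)).
          split. apply HL; simpl; lra. split. apply HL; simpl; lra. reflexivity. }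
      simpl.
      match goal with |- _ <= Rabs ?e => replace e with
        ((hi A - lo A) * (dR T * (IZR (m11 T) * IZR (m22 T) - IZR (m12 T) * IZR (m21 T)))) by ring end.
      rewrite <- dR_eq, Hd, Rmult_1_r, Rabs_right; lra.
Qed.
Definition FarX (C : pset) (g : pt) := forall R0, exists p, C p /\ fst p - fst g >= R0 /\
  Rabs (snd p - snd g) <= fst p - fst g.

Lemma div_between y x : 0 < x -> -x <= y <= x -> -1 <= y / x <= 1.
Proof.
  intros Hx H. split; apply Rmult_le_reg_r with x; auto; unfold Rdiv; rewrite Rmult_assoc, Rinv_l; lra.
Qed.
Lemma abs_between y x : Rabs y <= x -> -x <= y <= x.
Proof. intros H. destruct (Rcase_abs y); [rewrite Rabs_left in H|rewrite Rabs_right in H]; lra. Qed.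

Lemma lub_exists (E : R -> Prop) : (exists x, E x) -> (forall x, E x -> x <= 1) -> exists m, is_lub E m.
Proof.
  intros Hn Hb. destruct (completeness E) as [m Hm]. exists 1; intros x Hx; auto. auto. exists m; auto.
Qed.

Lemma limsup_slope (C : pset) g : FarX C g -> exists s, -1 <= s <= 1 /\
  forall e R0, 0 < e -> exists p, C p /\ fst p - fst g >= R0 /\ fst p - fst g >= 1 /\
    Rabs ((snd p - snd g) / (fst p - fst g) - s) < e.
Proof.
  intros HF.
  set (S := fun R0 sg => exists p, C p /\ fst p - fst g >= R0 /\ fst p - fst g >= 1 /\
             Rabs (snd p - snd g) <= fst p - fst g /\ sg = (snd p - snd g) / (fst p - fst g)).
  assert (Sb : forall R0 sg, S R0 sg -> -1 <= sg <= 1).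
  { intros R0 sg [p [_ [_ [H1 [H2 ->]]]]]. apply div_between. lra. apply abs_between; auto. }
  assert (Sne : forall R0, exists sg, S R0 sg).
  { intros R0. destruct (HF (Rmax R0 1)) as [p [Hp [H1 H2]]].
    exists ((snd p - snd g)/(fst p - fst g)), p.
    pose proof (Rmax_l R0 1); pose proof (Rmax_r R0 1). repeat split; auto; lra. }
  assert (Smono : forall R1 R2 sg, R1 <= R2 -> S R2 sg -> S R1 sg).
  { intros R1 R2 sg H [p [Hp [H1 H2]]]. exists p. split; auto. split; auto. lra. }
  set (E := fun v => exists R0, is_lub (S R0) v).
  assert (Elb : forall v, E v -> -1 <= v <= 1).
  { intros v [R0 [Hub Hl]]. destruct (Sne R0) as [sg Hs]. pose proof (Hub sg Hs). pose proof (Sb _ _ Hs).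
    split. lra. apply Hl. intros x Hx. apply (Sb _ _ Hx). }
  destruct (lub_exists (fun x => E (-x))) as [m [Hmu Hml]].
  { destruct (lub_exists (S 0)) as [v Hv]; [apply Sne| intros x Hx; apply (Sb 0 x Hx)|].
    exists (-v). exists 0. rewrite Ropp_involutive. auto. }
  { intros x Hx. apply Elb in Hx. lra. }
  assert (Hs_le : forall v, E v -> -m <= v).
  { intros v Hv. assert (-v <= m) by (apply Hmu; rewrite Ropp_involutive; auto). lra. }
  assert (Hs_approx : forall e, 0 < e -> exists v, E v /\ v < -m + e).
  { intros e He. apply NNPP; intro Hn. assert (m <= m - e). apply Hml. intros x Hx.
    destruct (Rle_dec x (m - e)); auto. exfalso; apply Hn. exists (-x). split; auto. lra. lra. }
  exists (-m). split.
  { destruct (Hs_approx 1 ltac:(lra)) as [v [Hv _]]. pose proof (Hs_le v Hv). pose proof (Elb v Hv).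
    split; [|lra]. assert (m <= 1). { apply Hml. intros x Hx. apply Elb in Hx. lra. } lra. }
  intros e R0 He.
  destruct (Hs_approx e He) as [v [[R1 Hv1] Hlt]].
  destruct (lub_exists (S (Rmax R0 R1))) as [vR HvR]. apply Sne. intros x Hx; apply (Sb _ x Hx).
  assert (HvRge : -m <= vR) by (apply Hs_le; exists (Rmax R0 R1); auto).
  assert (Hex : exists sg, S (Rmax R0 R1) sg /\ -m - e < sg).
  { apply NNPP; intro Hn. assert (vR <= -m - e). apply HvR. intros x Hx.
    destruct (Rle_dec x (-m-e)); auto. exfalso; apply Hn; exists x; split; auto; lra. lra. }
  destruct Hex as [sg [Hsg Hgt]].
  assert (sg <= v). { destruct Hv1 as [Hub _]. apply Hub. eapply Smono; [|exact Hsg]. apply Rmax_r. }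
  destruct Hsg as [p [Hp [H1 [H2 [H3 Hsgd]]]]]. exists p. split; auto.
  pose proof (Rmax_l R0 R1). split. lra. split. auto. rewrite <- Hsgd. apply Rabs_def1; lra.
Qed.

Lemma ray (C : pset) g s : closed_set C -> convex C -> C g ->
  (forall e R0, 0 < e -> exists p, C p /\ fst p - fst g >= R0 /\ fst p - fst g >= 1 /\
     Rabs ((snd p - snd g) / (fst p - fst g) - s) < e) ->
  forall t, 0 <= t -> C (fst g + t, snd g + t * s).
Proof.
  intros Hc Hv Hg Ha t Ht. apply NNPP; intro Hn.
  destruct (Hc _ Hn) as [e [He Hb]].
  destruct (Ha (e/(t+1)) (t+1)) as [p [Hp [H1 [H2 H3]]]]. apply Rdiv_lt_0_compat; lra.
  set (sg := (snd p - snd g) / (fst p - fst g)) in *.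
  set (lam := t / (fst p - fst g)).
  apply (Hb (fst g + t, snd g + t * sg)).
  - apply coord_dist. simpl. replace (fst g + t - (fst g + t)) with 0 by ring. rewrite Rabs_R0.
    replace (snd g + t * sg - (snd g + t * s)) with (t * (sg - s)) by ring.
    rewrite Rabs_mult, (Rabs_right t), Rplus_0_l by lra.
    apply Rle_lt_trans with (t * (e / (t+1))). apply Rmult_le_compat_l; lra.
    assert (E : t * (e/(t+1)) = e - e/(t+1)) by (field; lra).
    assert (0 < e/(t+1)) by (apply Rdiv_lt_0_compat; lra). lra.
  - apply (convexE C Hv g p _ lam Hg Hp).
    + unfold lam; split. apply Rdiv_le_0_compat; lra. apply Rmult_le_reg_r with (fst p - fst g). lra.
      unfold Rdiv; rewrite Rmult_assoc, Rinv_l; lra.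
    + unfold lam, sg; f_equal; field; lra.
Qed.

Lemma recess (C : pset) g s : closed_set C -> convex C ->
  (forall t, 0 <= t -> C (fst g + t, snd g + t * s)) ->
  forall c t, C c -> 0 <= t -> C (fst c + t, snd c + t * s).
Proof.
  intros Hc Hv Hr c t Hcc Ht. apply NNPP; intro Hn. destruct (Hc _ Hn) as [e [He Hb]].
  set (N := Rabs (fst g - fst c) + Rabs (snd g - snd c) + 1).
  assert (HN : 1 <= N) by (unfold N; pose proof (Rabs_pos (fst g - fst c)); pose proof (Rabs_pos (snd g - snd c)); lra).
  set (lam := Rmin (1/2) (e / (2*N))).
  assert (Hl0 : 0 < lam) by (unfold lam; apply Rmin_pos; [lra | apply Rdiv_lt_0_compat; lra]).
  assert (Hl1 : lam <= 1/2) by apply Rmin_l.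
  assert (Hl2 : lam <= e/(2*N)) by apply Rmin_r.
  apply (Hb ((1-lam) * fst c + lam * (fst g + t/lam), (1-lam) * snd c + lam * (snd g + t/lam * s))).
  - apply coord_dist. simpl.
    replace ((1 - lam) * fst c + lam * (fst g + t / lam) - (fst c + t)) with (lam * (fst g - fst c)) by (field; lra).
    replace ((1 - lam) * snd c + lam * (snd g + t / lam * s) - (snd c + t * s)) with (lam * (snd g - snd c)) by (field; lra).
    rewrite !Rabs_mult, (Rabs_right lam) by lra.
    assert (lam * (Rabs (fst g - fst c) + Rabs (snd g - snd c)) <= lam * (N - 1)) by (apply Rmult_le_compat_l; unfold N; lra).
    assert (lam * N <= e / 2). { apply Rle_trans with (e/(2*N) * N). apply Rmult_le_compat_r; lra.
      right; field; lra. }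
    nra.
  - apply (convexE C Hv c (fst g + t/lam, snd g + t/lam * s) _ lam Hcc).
    apply Hr. apply Rdiv_le_0_compat; lra. lra. reflexivity.
Qed.

Lemma Box_recess (C : pset) s x rho t :
  (forall c t, C c -> 0 <= t -> C (fst c + t, snd c + t * s)) ->
  Box C x rho -> 0 <= t -> Box C (fst x + t, snd x + t * s) rho.
Proof.
  intros Hr [Hp HB] Ht. split; auto. intros y [H1 H2]. simpl in *.
  replace y with (fst (fst y - t, snd y - t * s) + t, snd (fst y - t, snd y - t * s) + t * s)
    by (destruct y; simpl; f_equal; ring).
  apply Hr; auto. apply HB. unfold inB; simpl.
  replace (fst y - t - fst x) with (fst y - (fst x + t)) by ring.
  replace (snd y - t * s - snd x) with (snd y - (snd x + t * s)) by ring. auto.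
Qed.
Lemma small_mu a k G : a < k -> exists mu, 0 < mu <= 1 /\ mu * G + (1-mu) * a < k.
Proof.
  intros H. set (D := Rabs (G - a) + (k - a)).
  assert (HD : 0 < D) by (unfold D; pose proof (Rabs_pos (G - a)); lra).
  exists ((k-a)/(2*D)).
  assert (E : (k-a)/(2*D) * D = (k-a)/2) by (field; lra).
  assert (Hm0 : 0 < (k-a)/(2*D)) by (apply Rdiv_lt_0_compat; lra).
  pose proof (Rle_abs (G - a)). pose proof (Rabs_pos (G - a)).
  assert (HGD : G - a <= D) by (unfold D; lra).
  assert (HkD : k - a <= D) by (unfold D; lra).
  assert ((k-a)/(2*D) * (G - a) <= (k-a)/(2*D) * D) by (apply Rmult_le_compat_l; lra).
  split. split. auto. assert ((k-a)/(2*D) * D <= 1 * D). rewrite E. lra.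
  apply Rmult_le_reg_r with D; lra.
  replace ((k - a) / (2 * D) * G + (1 - (k - a) / (2 * D)) * a) with (a + (k-a)/(2*D) * (G - a)) by ring.
  lra.
Qed.

Lemma glb_exists (f : pt -> R) (C : pset) c0 lb : C c0 -> (forall c, C c -> lb <= f c) ->
  exists al, (forall c, C c -> al <= f c) /\ (forall x, al < x -> exists c, C c /\ f c < x).
Proof.
  intros H0 Hlb. set (E := fun y => exists c, C c /\ y = - f c).
  destruct (completeness E) as [m [Hmu Hml]].
  { exists (-lb). intros y [c [Hc ->]]. pose proof (Hlb c Hc). lra. }
  { exists (- f c0), c0. auto. }
  exists (-m). split.
  - intros c Hc. assert (- f c <= m) by (apply Hmu; exists c; auto). lra.
  - intros x Hx. apply NNPP; intro Hn. assert (m <= -x).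
    { apply Hml. intros y [c [Hc ->]]. destruct (Rle_dec (f c) x) as [Hl|Hl].
      destruct (Req_dec (f c) x). lra. exfalso; apply Hn; exists c; split; auto; lra. lra. }
    lra.
Qed.

Definition phiZ (p' q' : Z) (x : pt) := IZR p' * fst x - IZR q' * snd x.
Definition TkZ (p' q' a b : Z) (k : R) (n : Z) : unimod :=
  {| m11 := a; m12 := q'; m21 := b; m22 := p';
     b1 := k * IZR a + IZR n * IZR q'; b2 := k * IZR b + IZR n * IZR p' |}.

Lemma Tk_unimod A p' q' a b k n : (a * p' - b * q' = 1)%Z -> in_A A k -> is_unimod A (TkZ p' q' a b k n).
Proof.
  intros Hbez Hk. split. left. simpl. lia.
  destruct A; simpl; auto. destruct Hk as [kz ->]. split.
  exists (kz * a + n * q')%Z. rewrite plus_IZR, !mult_IZR; ring.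
  exists (kz * b + n * p')%Z. rewrite plus_IZR, !mult_IZR; ring.
Qed.

Lemma ell_Tk p' q' a b k q : (a * p' - b * q' = 1)%Z -> ellT (TkZ p' q' a b k 0) q = phiZ p' q' q - k.
Proof.
  intros Hbez. unfold ellT, dR, detZ, TkZ, phiZ; simpl.
  replace (a * p' - q' * b)%Z with 1%Z by lia. simpl.
  assert (H : IZR a * IZR p' - IZR b * IZR q' = 1) by (rewrite <- !mult_IZR, <- minus_IZR, Hbez; reflexivity).
  transitivity (IZR p' * fst q - IZR q' * snd q - k * (IZR a * IZR p' - IZR b * IZR q')).
  ring. rewrite H; ring.
Qed.

Section Rational.
Variable C : pset.
Variables (g : pt) (r : R) (s : R) (p' q' a b : Z).
Hypothesis Hv : convex C.
Hypothesis HB : Box C g r.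
Hypothesis Hrec : forall c t, C c -> 0 <= t -> C (fst c + t, snd c + t * s).
Hypothesis Hq : (0 < q')%Z.
Hypothesis Hs : s = IZR p' / IZR q'.
Hypothesis Hbez : (a * p' - b * q' = 1)%Z.
Let phi := phiZ p' q'.
Let Tk := TkZ p' q' a b.

Lemma Hqr : 0 < IZR q'.
Proof. apply IZR_lt; auto. Qed.
Lemma Hbezr : IZR a * IZR p' - IZR b * IZR q' = 1.
Proof. rewrite <- !mult_IZR, <- minus_IZR, Hbez. reflexivity. Qed.

Lemma Box_v x rho tau : Box C x rho -> 0 <= tau -> Box C (fst x + tau * IZR q', snd x + tau * IZR p') rho.
Proof.
  intros Hx Ht. pose proof Hqr.
  replace (snd x + tau * IZR p') with (snd x + tau * IZR q' * s) by (rewrite Hs; field; lra).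
  apply Box_recess; auto. nra.
Qed.

Lemma kernel x1 x2 : IZR p' * x1 - IZR q' * x2 = 0 ->
  let tau := (IZR q' * x1 + IZR p' * x2) / (IZR q' * IZR q' + IZR p' * IZR p') in
  x1 = tau * IZR q' /\ x2 = tau * IZR p'.
Proof.
  intros H tau. pose proof Hqr. assert (Hd : 0 < IZR q' * IZR q' + IZR p' * IZR p') by nra.
  split.
  - assert (E : tau * IZR q' - x1 = - IZR p' * (IZR p' * x1 - IZR q' * x2) / (IZR q' * IZR q' + IZR p' * IZR p'))
      by (unfold tau; field; lra).
    rewrite H in E. unfold Rdiv in E. rewrite Rmult_0_r, Rmult_0_l in E. lra.
  - assert (E : tau * IZR p' - x2 = IZR q' * (IZR p' * x1 - IZR q' * x2) / (IZR q' * IZR q' + IZR p' * IZR p'))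
      by (unfold tau; field; lra).
    rewrite H in E. unfold Rdiv in E. rewrite Rmult_0_r, Rmult_0_l in E. lra.
Qed.

Lemma seg_point w1 w2 r1 r2 th : Box C w1 r1 -> Box C w2 r2 -> phi w1 < th < phi w2 ->
  exists y, Box C y (Rmin r1 r2) /\ phi y = th.
Proof.
  intros B1 B2 Ht. set (t := (th - phi w1) / (phi w2 - phi w1)).
  assert (H01 : 0 <= t <= 1).
  { unfold t. split. apply Rdiv_le_0_compat; lra.
    apply Rmult_le_reg_r with (phi w2 - phi w1). lra. unfold Rdiv; rewrite Rmult_assoc, Rinv_l; lra. }
  exists ((1-t)*fst w1 + t*fst w2, (1-t)*snd w1 + t*snd w2). split.
  apply BoxComb2; auto.
  unfold phi, phiZ in *; simpl. unfold t. field. lra.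
Qed.

Lemma rat_claim c1 c2 k : C c1 -> C c2 -> phi c1 < k -> k + 1 < phi c2 ->
  exists n rho, Box C (apply_unimod (Tk k n) (0,0)) rho /\ Box C (apply_unimod (Tk k n) (1,0)) rho /\
    Box C (apply_unimod (Tk k n) (0,1)) rho.
Proof.
  intros Hc1 Hc2 Hk1 Hk2. pose proof Hqr as Hq0. pose proof Hbezr as Hb0.
  destruct (small_mu (phi c1) k (phi g) Hk1) as [mu1 [Hm1 Hmu1]].
  destruct (small_mu (-phi c2) (-(k+1)) (-phi g)) as [mu2 [Hm2 Hmu2]]. lra.
  pose proof (BoxMix C Hv g c1 r mu1 HB Hc1 Hm1) as B1.
  pose proof (BoxMix C Hv g c2 r mu2 HB Hc2 Hm2) as B2.
  set (w1 := (mu1 * fst g + (1 - mu1) * fst c1, mu1 * snd g + (1 - mu1) * snd c1)) in B1.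
  set (w2 := (mu2 * fst g + (1 - mu2) * fst c2, mu2 * snd g + (1 - mu2) * snd c2)) in B2.
  assert (E1 : phi w1 = mu1 * phi g + (1 - mu1) * phi c1) by (unfold phi, phiZ, w1; simpl; ring).
  assert (E2 : phi w2 = mu2 * phi g + (1 - mu2) * phi c2) by (unfold phi, phiZ, w2; simpl; ring).
  destruct (seg_point w1 w2 _ _ k B1 B2) as [y [By Ey]]. lra.
  destruct (seg_point w1 w2 _ _ (k+1) B1 B2) as [y' [By' Ey']]. lra.
  set (rho := Rmin (mu1 * r) (mu2 * r)) in *.
  assert (K0 : IZR p' * (k * IZR a - fst y) - IZR q' * (k * IZR b - snd y) = 0).
  { unfold phi, phiZ in Ey. replace (IZR p' * (k * IZR a - fst y) - IZR q' * (k * IZR b - snd y))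
      with (k * (IZR a * IZR p' - IZR b * IZR q') - (IZR p' * fst y - IZR q' * snd y)) by ring.
    rewrite Hb0, Ey. ring. }
  assert (K1 : IZR p' * ((k+1) * IZR a - fst y') - IZR q' * ((k+1) * IZR b - snd y') = 0).
  { unfold phi, phiZ in Ey'. replace (IZR p' * ((k+1) * IZR a - fst y') - IZR q' * ((k+1) * IZR b - snd y'))
      with ((k+1) * (IZR a * IZR p' - IZR b * IZR q') - (IZR p' * fst y' - IZR q' * snd y')) by ring.
    rewrite Hb0, Ey'. ring. }
  destruct (kernel _ _ K0) as [K0a K0b]. destruct (kernel _ _ K1) as [K1a K1b].
  set (tau0 := (IZR q' * (k * IZR a - fst y) + IZR p' * (k * IZR b - snd y)) /
               (IZR q' * IZR q' + IZR p' * IZR p')) in *.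
  set (tau1 := (IZR q' * ((k + 1) * IZR a - fst y') + IZR p' * ((k + 1) * IZR b - snd y')) /
               (IZR q' * IZR q' + IZR p' * IZR p')) in *.
  set (n := up (Rabs tau0 + Rabs tau1)).
  assert (Hn : IZR n > Rabs tau0 + Rabs tau1) by apply archimed.
  pose proof (Rle_abs (-tau0)); pose proof (Rle_abs (-tau1)). rewrite Rabs_Ropp in *.
  pose proof (Rabs_pos tau0); pose proof (Rabs_pos tau1).
  exists n, rho. split; [|split].
  - replace (apply_unimod (Tk k n) (0,0)) with (fst y + (tau0 + IZR n) * IZR q', snd y + (tau0 + IZR n) * IZR p').
    apply Box_v; auto. lra.
    unfold apply_unimod, Tk, TkZ; simpl. f_equal; nra.
  - replace (apply_unimod (Tk k n) (1,0)) with (fst y' + (tau1 + IZR n) * IZR q', snd y' + (tau1 + IZR n) * IZR p').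
    apply Box_v; auto. lra.
    unfold apply_unimod, Tk, TkZ; simpl. f_equal; nra.
  - replace (apply_unimod (Tk k n) (0,1)) with (fst y + (tau0 + IZR n + 1) * IZR q', snd y + (tau0 + IZR n + 1) * IZR p').
    apply Box_v; auto. lra.
    unfold apply_unimod, Tk, TkZ; simpl. f_equal; nra.
Qed.

Lemma rational_case A : freeV A C -> exists T, is_unimod A T /\ set_sub C (image T (strip A)).
Proof.
  intros Hf.
  pose proof (Box_self _ _ _ HB) as Hg.
  assert (Hno : forall c1 c2 k, in_A A k -> C c1 -> C c2 -> phi c1 < k -> k + 1 < phi c2 -> False).
  { intros c1 c2 k Hk Hc1 Hc2 H1 H2. destruct (rat_claim c1 c2 k Hc1 Hc2 H1 H2) as [n [rho [B0 [B1 B2]]]].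
    apply Hf. exists (Tk k n), rho. split; auto. apply Tk_unimod; auto. }
  destruct A.
  - assert (Hlb : forall c, C c -> phi g - 2 <= phi c).
    { intros c Hc. apply NNPP; intro Hn. pose proof (archimed (phi c)) as [Ha1 Ha2].
      apply (Hno c g (IZR (up (phi c)))); [exists (up (phi c)); reflexivity|auto|auto|lra|lra]. }
    destruct (glb_exists phi C g _ Hg Hlb) as [al [Hal1 Hal2]].
    pose proof (archimed al) as [Hk1 Hk2]. set (k0 := up al) in *.
    exists (Tk (IZR k0) 0). split. apply Tk_unimod; auto. exists k0; auto.
    intros c Hc. rewrite (imstrip_iff AZ) by (apply Tk_unimod; auto; exists k0; auto).
    unfold Tk. rewrite ell_Tk by auto. fold phi. unfold lo, hi. pose proof (Hal1 c Hc). split. lra.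
    apply NNPP; intro Hn. destruct (Hal2 (IZR k0)) as [c1 [Hc1 Hlt]]. lra.
    apply (Hno c1 c (IZR k0)); [exists k0; reflexivity|auto|auto|lra|lra].
  - assert (Hlb : forall c, C c -> phi g - 1 <= phi c).
    { intros c Hc. apply NNPP; intro Hn.
      apply (Hno c g ((phi c + phi g - 1)/2)); [exact I|auto|auto|lra|lra]. }
    destruct (glb_exists phi C g _ Hg Hlb) as [al [Hal1 Hal2]].
    exists (Tk al 0). split. apply Tk_unimod; auto. exact I.
    intros c Hc. rewrite (imstrip_iff AR) by (apply Tk_unimod; auto; exact I).
    unfold Tk. rewrite ell_Tk by auto. fold phi. unfold lo, hi. pose proof (Hal1 c Hc). split. lra.
    apply NNPP; intro Hn. destruct (Hal2 (phi c - 1)) as [c1 [Hc1 Hlt]]. lra.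
    apply (Hno c1 c ((phi c1 + phi c - 1)/2)); [exact I|auto|auto|lra|lra].
Qed.
End Rational.
Definition flr (x : R) : Z := (up x - 1)%Z.
Definition frac (x : R) : R := x - IZR (flr x).
Lemma frac_bounds x : 0 <= frac x < 1.
Proof.
  unfold frac, flr. pose proof (archimed x) as [H1 H2]. rewrite minus_IZR. simpl. lra.
Qed.

Lemma newpt (v1 v2 w1 w2 e1 e2 : Z) (sg ta : R) :
  IZR e1 = sg * IZR v1 + ta * IZR w1 -> IZR e2 = sg * IZR v2 + ta * IZR w2 ->
  (frac sg <> 0 \/ frac ta <> 0) ->
  exists (n1 n2 : Z) (a b : R), IZR n1 = a * IZR v1 + b * IZR w1 /\ IZR n2 = a * IZR v2 + b * IZR w2 /\
    0 <= a /\ 0 <= b /\ a + b <= 1 /\ ((0 < b < 1) \/ (b = 0 /\ 0 < a < 1)).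
Proof.
  intros E1 E2 Hfr. pose proof (frac_bounds sg) as Fs. pose proof (frac_bounds ta) as Ft.
  set (m1 := (e1 - flr sg * v1 - flr ta * w1)%Z). set (m2 := (e2 - flr sg * v2 - flr ta * w2)%Z).
  assert (M1 : IZR m1 = frac sg * IZR v1 + frac ta * IZR w1).
  { unfold m1, frac. rewrite !minus_IZR, !mult_IZR, E1. ring. }
  assert (M2 : IZR m2 = frac sg * IZR v2 + frac ta * IZR w2).
  { unfold m2, frac. rewrite !minus_IZR, !mult_IZR, E2. ring. }
  destruct (Rle_dec (frac sg + frac ta) 1) as [Hle|Hgt].
  - exists m1, m2, (frac sg), (frac ta).
    split; [exact M1|]. split; [exact M2|]. split; [lra|]. split; [lra|]. split; [lra|].
    destruct (Req_dec (frac ta) 0) as [Z0|Z0].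
    + right. split; auto. destruct Hfr; [|contradiction]. lra.
    + left; lra.
  - exists (v1 + w1 - m1)%Z, (v2 + w2 - m2)%Z, (1 - frac sg), (1 - frac ta).
    rewrite !minus_IZR, !plus_IZR, M1, M2. repeat split; try ring; try lra.
Qed.

Lemma lattice_tri (Q : pset) : convex Q -> forall N (x0 y0 x1 y1 x2 y2 : Z),
  (Z.abs ((x1-x0)*(y2-y0) - (y1-y0)*(x2-x0)) <= Z.of_nat N)%Z ->
  ((x1-x0)*(y2-y0) - (y1-y0)*(x2-x0) <> 0)%Z ->
  Q (IZR x0, IZR y0) -> Q (IZR x1, IZR y1) -> Q (IZR x2, IZR y2) ->
  exists T, is_unimod AZ T /\ Q (apply_unimod T (0,0)) /\ Q (apply_unimod T (1,0)) /\ Q (apply_unimod T (0,1)).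
Proof.
  intros HQ N. induction N as [|N IH]; intros x0 y0 x1 y1 x2 y2 HN HD H0 H1 H2.
  - lia.
  - set (v1 := (x1 - x0)%Z) in *. set (v2 := (y1 - y0)%Z) in *.
    set (w1 := (x2 - x0)%Z) in *. set (w2 := (y2 - y0)%Z) in *.
    set (D := (v1 * w2 - v2 * w1)%Z) in *.
    destruct (Z.eq_dec (Z.abs D) 1) as [E1|E1].
    + exists {| m11 := v1; m12 := w1; m21 := v2; m22 := w2; b1 := IZR x0; b2 := IZR y0 |}.
      split. split. simpl. fold D. lia. simpl; split; [exists x0|exists y0]; auto.
      unfold apply_unimod; simpl. unfold v1, v2, w1, w2. rewrite !minus_IZR.
      split; [|split];
      match goal with |- Q ?z => match goal with H : Q ?w |- _ => replace z with w; [exact H|f_equal; ring] end end.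
    + assert (HDr : IZR D <> 0) by (intros E; apply eq_IZR in E; lia).
      assert (Ev : IZR D = IZR v1 * IZR w2 - IZR v2 * IZR w1) by (unfold D; rewrite minus_IZR, !mult_IZR; ring).
      set (s1 := IZR w2 / IZR D). set (t1 := - IZR v2 / IZR D).
      set (s2 := - IZR w1 / IZR D). set (t2 := IZR v1 / IZR D).
      assert (Hfr : (frac s1 <> 0 \/ frac t1 <> 0) \/ (frac s2 <> 0 \/ frac t2 <> 0)).
      { apply NNPP; intro Hn.
        assert (F1 : frac s1 = 0) by (apply NNPP; intro; apply Hn; auto).
        assert (F2 : frac t1 = 0) by (apply NNPP; intro; apply Hn; auto).
        assert (F3 : frac s2 = 0) by (apply NNPP; intro; apply Hn; auto).
        assert (F4 : frac t2 = 0) by (apply NNPP; intro; apply Hn; auto).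
        unfold frac in F1, F2, F3, F4.
        assert (Hid : IZR D * (s1 * t2 - t1 * s2) = 1).
        { unfold s1, t1, s2, t2. rewrite Ev in *. field. auto. }
        replace s1 with (IZR (flr s1)) in Hid by lra. replace t1 with (IZR (flr t1)) in Hid by lra.
        replace s2 with (IZR (flr s2)) in Hid by lra. replace t2 with (IZR (flr t2)) in Hid by lra.
        rewrite <- !mult_IZR, <- minus_IZR, <- mult_IZR in Hid. apply eq_IZR in Hid.
        apply Z.mul_eq_1 in Hid. lia. }
      assert (Hnp : exists (n1 n2 : Z) (a b : R), IZR n1 = a * IZR v1 + b * IZR w1 /\ IZR n2 = a * IZR v2 + b * IZR w2 /\
        0 <= a /\ 0 <= b /\ a + b <= 1 /\ ((0 < b < 1) \/ (b = 0 /\ 0 < a < 1))).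
      { destruct Hfr as [Hf|Hf].
        - apply (newpt v1 v2 w1 w2 1 0 s1 t1); auto; unfold s1, t1; rewrite Ev in *; field; auto.
        - apply (newpt v1 v2 w1 w2 0 1 s2 t2); auto; unfold s2, t2; rewrite Ev in *; field; auto. }
      destruct Hnp as [n1 [n2 [a [b [En1 [En2 [Ha [Hb [Hab Hcase]]]]]]]]].
      assert (Hn : Q (IZR (x0 + n1), IZR (y0 + n2))).
      { replace (IZR (x0 + n1), IZR (y0 + n2)) with
          ((1 - a - b) * fst (IZR x0, IZR y0) + a * fst (IZR x1, IZR y1) + b * fst (IZR x2, IZR y2),
           (1 - a - b) * snd (IZR x0, IZR y0) + a * snd (IZR x1, IZR y1) + b * snd (IZR x2, IZR y2)).
        apply conv3; auto; lra.
        simpl. rewrite !plus_IZR, En1, En2. unfold v1, v2, w1, w2. rewrite !minus_IZR. f_equal; ring. }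
      assert (HDabs : 0 < Rabs (IZR D)) by (apply Rabs_pos_lt; auto).
      assert (HNr : IZR (Z.abs D) <= IZR (Z.of_nat (S N))) by (apply IZR_le; auto).
      destruct Hcase as [[Hb0 Hb1] | [Hb0 [Ha0 Ha1]]].
      + set (D' := ((x1 - x0) * (y0 + n2 - y0) - (y1 - y0) * (x0 + n1 - x0))%Z).
        assert (ED' : IZR D' = b * IZR D).
        { unfold D'. rewrite !minus_IZR, !mult_IZR, !minus_IZR, !plus_IZR.
          replace (IZR y0 + IZR n2 - IZR y0) with (IZR n2) by ring.
          replace (IZR x0 + IZR n1 - IZR x0) with (IZR n1) by ring.
          rewrite En1, En2, Ev. unfold v1, v2, w1, w2. rewrite !minus_IZR. ring. }
        apply (IH x0 y0 x1 y1 (x0 + n1)%Z (y0 + n2)%Z); auto.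
        * assert (Rabs (IZR D') < Rabs (IZR D)).
          { rewrite ED', Rabs_mult, (Rabs_right b) by lra. nra. }
          rewrite !Rabs_Zabs in H. apply lt_IZR in H. rewrite Nat2Z.inj_succ in HN. lia.
        * fold D'. intros E. rewrite E in ED'. simpl in ED'. nra.
      + set (D' := ((x0 + n1 - x0) * (y2 - y0) - (y0 + n2 - y0) * (x2 - x0))%Z).
        assert (ED' : IZR D' = a * IZR D).
        { unfold D'. rewrite !minus_IZR, !mult_IZR, !minus_IZR, !plus_IZR.
          replace (IZR y0 + IZR n2 - IZR y0) with (IZR n2) by ring.
          replace (IZR x0 + IZR n1 - IZR x0) with (IZR n1) by ring.
          rewrite En1, En2, Ev, Hb0. unfold v1, v2, w1, w2. rewrite !minus_IZR. ring. }
        apply (IH x0 y0 (x0 + n1)%Z (y0 + n2)%Z x2 y2); auto.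
        * assert (Rabs (IZR D') < Rabs (IZR D)).
          { rewrite ED', Rabs_mult, (Rabs_right a) by lra. nra. }
          rewrite !Rabs_Zabs in H. apply lt_IZR in H. rewrite Nat2Z.inj_succ in HN. lia.
        * fold D'. intros E. rewrite E in ED'. simpl in ED'. nra.
Qed.
Definition Gs (s x : R) := exists q p : Z, x = IZR q * s - IZR p.
Lemma Gs_sub s x y : Gs s x -> Gs s y -> Gs s (x - y).
Proof. intros [q [p ->]] [q' [p' ->]]. exists (q - q')%Z, (p - p')%Z. rewrite !minus_IZR. ring. Qed.
Lemma Gs_mul s x (k:Z) : Gs s x -> Gs s (IZR k * x).
Proof. intros [q [p ->]]. exists (k * q)%Z, (k * p)%Z. rewrite !mult_IZR. ring. Qed.
Lemma Gs_one s : Gs s 1.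
Proof. exists 0%Z, (-1)%Z. simpl. ring. Qed.
Lemma Gs_s s : Gs s s.
Proof. exists 1%Z, 0%Z. simpl. ring. Qed.

Definition irr (s : R) := ~ exists p q : Z, (0 < q)%Z /\ s = IZR p / IZR q.

Lemma approx s : irr s -> forall e, 0 < e -> exists q p : Z, 0 < IZR q * s - IZR p < e.
Proof.
  intros Hirr e He. apply NNPP; intro Hn.
  assert (Hlb : forall x, Gs s x -> 0 < x -> e <= x).
  { intros x [q [p ->]] Hx. apply NNPP; intro. apply Hn. exists q, p. lra. }
  set (E := fun y => exists x, Gs s x /\ 0 < x /\ y = -x).
  destruct (completeness E) as [m [Hmu Hml]].
  { exists (-e). intros y [x [Hx [Hx0 ->]]]. pose proof (Hlb x Hx Hx0). lra. }
  { exists (-1). exists 1. split. apply Gs_one. lra. }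
  set (al := -m).
  assert (Hal_lb : forall x, Gs s x -> 0 < x -> al <= x).
  { intros x Hx Hx0. assert (-x <= m) by (apply Hmu; exists x; auto). unfold al; lra. }
  assert (Hal_e : e <= al).
  { assert (m <= -e). apply Hml. intros y [x [Hx [Hx0 ->]]]. pose proof (Hlb x Hx Hx0). lra. unfold al; lra. }
  assert (Hal_ap : forall z, al < z -> exists x, Gs s x /\ 0 < x /\ x < z).
  { intros z Hz. apply NNPP; intro Hnn. assert (m <= -z). apply Hml. intros y [x [Hx [Hx0 ->]]].
    destruct (Rlt_dec x z). exfalso; apply Hnn; exists x; auto. lra. unfold al in Hz; lra. }
  assert (HalG : Gs s al).
  { destruct (Hal_ap (al + al)) as [x [Hx [Hx0 Hx1]]]. lra.
    destruct (Req_dec x al) as [<-|Hne]; auto.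
    pose proof (Hal_lb x Hx Hx0).
    destruct (Hal_ap x) as [y [Hy [Hy0 Hy1]]]. lra.
    pose proof (Hal_lb y Hy Hy0).
    exfalso. pose proof (Hal_lb (x - y) (Gs_sub s x y Hx Hy) ltac:(lra)). lra. }
  assert (Hdiv : forall z, Gs s z -> exists k : Z, z = IZR k * al).
  { intros z Hz. set (k := (up (z / al) - 1)%Z). exists k.
    pose proof (archimed (z/al)) as [A1 A2].
    assert (Hk : IZR k <= z / al < IZR k + 1) by (unfold k; rewrite minus_IZR; simpl; lra).
    assert (Ez : z = z / al * al) by (field; lra).
    assert (Hr0 : IZR k * al <= z). { rewrite Ez at 1. apply Rmult_le_compat_r; lra. }
    assert (Hr1 : z < IZR k * al + al). { rewrite Ez at 1. replace (IZR k * al + al) with ((IZR k + 1) * al) by ring.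
      apply Rmult_lt_compat_r; lra. }
    destruct (Req_dec (z - IZR k * al) 0) as [E0|E0]. lra.
    exfalso. pose proof (Hal_lb (z - IZR k * al) (Gs_sub s _ _ Hz (Gs_mul s al k HalG)) ltac:(lra)). lra. }
  destruct (Hdiv 1 (Gs_one s)) as [m1 Hm1]. destruct (Hdiv s (Gs_s s)) as [m2 Hm2].
  apply Hirr. exists m2, m1.
  assert (Hm1p : 0 < IZR m1). { destruct (Rle_dec (IZR m1) 0); [|lra]. nra. }
  split. apply lt_IZR; auto.
  assert (Hal : al = / IZR m1).
  { apply Rmult_eq_reg_l with (IZR m1). 2: lra. rewrite Rinv_r by lra. lra. }
  rewrite Hm2, Hal. unfold Rdiv. ring.
Qed.

Lemma window s : irr s -> forall c r T0, 0 < r -> exists X Y : Z,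
  T0 <= IZR X /\ Rabs (IZR Y - IZR X * s - c) < r.
Proof.
  intros Hirr c r T0 Hr. destruct (approx s Hirr r Hr) as [q [p [Hx0 Hx1]]].
  set (x := IZR q * s - IZR p) in *.
  pose proof (archimed (T0 + Rabs (IZR q) * (1/x + 1))) as [A1 A2].
  set (X0 := up (T0 + Rabs (IZR q) * (1/x + 1))) in *.
  pose proof (archimed (IZR X0 * s + c)) as [B1 B2].
  set (Y0 := up (IZR X0 * s + c)) in *.
  set (base := IZR Y0 - IZR X0 * s - c).
  assert (Hb : 0 < base <= 1) by (unfold base; lra).
  pose proof (archimed (base/x)) as [C1 C2].
  set (k := (up (base / x) - 1)%Z).
  assert (Hk : IZR k <= base / x < IZR k + 1) by (unfold k; rewrite minus_IZR; simpl; lra).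
  assert (Hbx : 0 < base / x) by (apply Rdiv_lt_0_compat; lra).
  assert (Hk0 : 0 <= IZR k).
  { unfold k. rewrite minus_IZR. assert (0 < up (base/x))%Z by (apply lt_IZR; simpl; lra).
    assert (1 <= up (base/x))%Z by lia. apply IZR_le in H0. simpl in H0. lra. }
  assert (Eb : base = base / x * x) by (field; lra).
  assert (Hkx1 : IZR k * x <= base) by (rewrite Eb at 1; apply Rmult_le_compat_r; lra).
  assert (Hkx2 : base < IZR k * x + x).
  { rewrite Eb at 1. replace (IZR k * x + x) with ((IZR k + 1) * x) by ring. apply Rmult_lt_compat_r; lra. }
  assert (Hk1 : IZR k <= 1 / x).
  { apply Rle_trans with (base / x). lra. unfold Rdiv. apply Rmult_le_compat_r.
    apply Rlt_le, Rinv_0_lt_compat; lra. lra. }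
  exists (X0 + k * q)%Z, (Y0 + k * p)%Z. rewrite !plus_IZR, !mult_IZR. split.
  - pose proof (Rle_abs (- IZR q)). rewrite Rabs_Ropp in H.
    assert (IZR k * IZR q >= - (IZR k * Rabs (IZR q))) by nra.
    assert (IZR k * Rabs (IZR q) <= 1 / x * Rabs (IZR q)) by (apply Rmult_le_compat_r; [apply Rabs_pos|lra]).
    pose proof (Rabs_pos (IZR q)). nra.
  - replace (IZR Y0 + IZR k * IZR p - (IZR X0 + IZR k * IZR q) * s - c) with (base - IZR k * x)
      by (unfold base, x; ring).
    rewrite Rabs_right; lra.
Qed.

Lemma three_pts s : irr s -> forall c r T0, 0 < r -> exists X1 Y1 X2 Y2 X3 Y3 : Z,
  T0 <= IZR X1 /\ T0 <= IZR X2 /\ T0 <= IZR X3 /\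
  Rabs (IZR Y1 - IZR X1 * s - c) < r /\ Rabs (IZR Y2 - IZR X2 * s - c) < r /\
  Rabs (IZR Y3 - IZR X3 * s - c) < r /\
  ((X2 - X1) * (Y3 - Y1) - (Y2 - Y1) * (X3 - X1) <> 0)%Z.
Proof.
  intros Hirr c r T0 Hr. destruct (approx s Hirr (r/3)) as [q [p [Hx0 Hx1]]]. lra.
  set (x := IZR q * s - IZR p) in *.
  destruct (window s Hirr c (r/3) (T0 + Rabs (IZR q))) as [X1 [Y1 [HX1 HE1]]]. lra.
  destruct (window s Hirr c (r/3) (Rmax T0 (IZR X1 + Rabs (IZR q) * r / x + 1))) as [X3 [Y3 [HX3 HE3]]]. lra.
  pose proof (Rmax_l T0 (IZR X1 + Rabs (IZR q) * r / x + 1)).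
  pose proof (Rmax_r T0 (IZR X1 + Rabs (IZR q) * r / x + 1)).
  pose proof (Rle_abs (- IZR q)). rewrite Rabs_Ropp in H1. pose proof (Rabs_pos (IZR q)).
  exists X1, Y1, (X1 + q)%Z, (Y1 + p)%Z, X3, Y3.
  rewrite !plus_IZR. split; [lra|]. split; [lra|]. split; [lra|]. split; [lra|].
  split.
  { replace (IZR Y1 + IZR p - (IZR X1 + IZR q) * s - c) with ((IZR Y1 - IZR X1 * s - c) - x) by (unfold x; ring).
    eapply Rle_lt_trans. apply Rabs_triang. rewrite Rabs_Ropp, (Rabs_right x) by lra. lra. }
  split; [lra|].
  replace (X1 + q - X1)%Z with q by ring. replace (Y1 + p - Y1)%Z with p by ring.
  intros E. assert (Er : IZR q * (IZR Y3 - IZR Y1) = IZR p * (IZR X3 - IZR X1)).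
  { rewrite <- !minus_IZR, <- !mult_IZR. f_equal. lia. }
  set (e1 := IZR Y1 - IZR X1 * s - c) in *. set (e3 := IZR Y3 - IZR X3 * s - c) in *.
  assert (Eq : IZR q * (e3 - e1) = - ((IZR X3 - IZR X1) * x)).
  { unfold e1, e3, x. transitivity (IZR q * (IZR Y3 - IZR Y1) - IZR q * s * (IZR X3 - IZR X1)). ring.
    rewrite Er. ring. }
  assert (Hd : IZR X3 - IZR X1 > Rabs (IZR q) * r / x) by lra.
  assert (Hg : (IZR X3 - IZR X1) * x > Rabs (IZR q) * r).
  { replace (Rabs (IZR q) * r) with (Rabs (IZR q) * r / x * x) by (field; lra).
    apply Rmult_gt_compat_r; lra. }
  assert (Hl : Rabs (IZR q * (e3 - e1)) <= Rabs (IZR q) * (2 * r / 3)).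
  { rewrite Rabs_mult. apply Rmult_le_compat_l. apply Rabs_pos.
    eapply Rle_trans. apply Rabs_triang. rewrite Rabs_Ropp. lra. }
  rewrite Eq, Rabs_Ropp, Rabs_right in Hl by nra. nra.
Qed.

Lemma Box_shrink C x r P : Box C x r -> Rabs (fst P - fst x) < r/2 -> Rabs (snd P - snd x) < r/2 ->
  Box C P (r/2).
Proof.
  intros [Hr HB] H1 H2. split. lra. intros y [Hy1 Hy2]. apply HB. split.
  - replace (fst y - fst x) with ((fst y - fst P) + (fst P - fst x)) by ring.
    eapply Rle_lt_trans. apply Rabs_triang. lra.
  - replace (snd y - snd x) with ((snd y - snd P) + (snd P - snd x)) by ring.
    eapply Rle_lt_trans. apply Rabs_triang. lra.
Qed.

Lemma unimodZ_any A T : is_unimod AZ T -> is_unimod A T.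
Proof. intros [H1 [H2 H3]]. destruct A; split; auto; simpl; auto. Qed.

Lemma irrational_case A C g r s : convex C -> Box C g r ->
  (forall c t, C c -> 0 <= t -> C (fst c + t, snd c + t * s)) -> irr s -> freeV A C -> False.
Proof.
  intros Hv HB Hrec Hirr Hf. pose proof (proj1 HB) as Hr.
  destruct (three_pts s Hirr (snd g - fst g * s) (r/2) (fst g)) as
    [X1 [Y1 [X2 [Y2 [X3 [Y3 [HX1 [HX2 [HX3 [HE1 [HE2 [HE3 HD]]]]]]]]]]]]. lra.
  set (Q := fun x => Box C x (r/2)).
  assert (HQ : convex Q).
  { intros x y t Hx Hy Ht. unfold Q. rewrite cc_eq. replace (r/2) with (Rmin (r/2) (r/2)) by (apply Rmin_left; lra).
    apply BoxComb2; auto. }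
  assert (HP : forall X Y : Z, fst g <= IZR X -> Rabs (IZR Y - IZR X * s - (snd g - fst g * s)) < r/2 ->
                 Q (IZR X, IZR Y)).
  { intros X Y H1 H2. unfold Q.
    pose proof (Box_recess C s g r (IZR X - fst g) Hrec HB ltac:(lra)) as B.
    apply (Box_shrink C _ r _ B); simpl.
    replace (IZR X - (fst g + (IZR X - fst g))) with 0 by ring. rewrite Rabs_R0. lra.
    replace (IZR Y - (snd g + (IZR X - fst g) * s)) with (IZR Y - IZR X * s - (snd g - fst g * s)) by ring. auto. }
  destruct (lattice_tri Q HQ (Z.abs_nat ((X2 - X1) * (Y3 - Y1) - (Y2 - Y1) * (X3 - X1))) X1 Y1 X2 Y2 X3 Y3)
    as [T [HT [Q0 [Q1 Q2]]]]; auto.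
  rewrite Zabs2Nat.id_abs. lia.
  apply Hf. exists T, (r/2). split. apply unimodZ_any; auto. auto.
Qed.
Lemma core A (C : pset) g r : closed_set C -> convex C -> Box C g r -> FarX C g -> freeV A C ->
  exists T, is_unimod A T /\ set_sub C (image T (strip A)).
Proof.
  intros Hc Hv HB HF Hf. pose proof (Box_self _ _ _ HB) as Hg.
  destruct (limsup_slope C g HF) as [s [_ Hs]].
  pose proof (ray C g s Hc Hv Hg Hs) as Hray.
  pose proof (recess C g s Hc Hv Hray) as Hrec.
  destruct (classic (exists p q : Z, (0 < q)%Z /\ s = IZR p / IZR q)) as [[p [q [Hq Es]]]|Hirr].
  - set (g0 := Z.gcd p q).
    assert (Hg0 : (0 < g0)%Z).
    { pose proof (Z.gcd_nonneg p q). destruct (Z.eq_dec g0 0) as [E|E].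
      apply Z.gcd_eq_0 in E. lia. unfold g0 in *. lia. }
    destruct (Z.gcd_divide_l p q) as [p' Ep]. destruct (Z.gcd_divide_r p q) as [q' Eq]. fold g0 in Ep, Eq.
    assert (Hq' : (0 < q')%Z) by nia.
    assert (Hgcd : Z.gcd p' q' = 1%Z).
    { pose proof (Z.gcd_div_gcd p q g0 ltac:(lia) eq_refl) as H.
      rewrite Ep, Eq, !Z.div_mul in H by lia. auto. }
    destruct (Z.gcd_bezout p' q' 1 Hgcd) as [u [v Huv]].
    apply (rational_case C g r s p' q' u (-v)%Z Hv HB Hrec Hq').
    + rewrite Es, Ep, Eq, !mult_IZR. field. split; apply not_0_IZR; lia.
    + lia.
    + auto.
  - exfalso. apply (irrational_case A C g r s Hv HB Hrec Hirr Hf).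
Qed.

Definition E4 (e1 e2 : Z) := (e1 = 1 /\ e2 = 0 \/ e1 = 0 /\ e2 = 1 \/ e1 = -1 /\ e2 = 0 \/ e1 = 0 /\ e2 = -1)%Z.
Definition rot (e1 e2 : Z) (p : pt) : pt :=
  (IZR e1 * fst p + IZR e2 * snd p, - IZR e2 * fst p + IZR e1 * snd p).
Definition rotinv (e1 e2 : Z) (p : pt) : pt :=
  (IZR e1 * fst p - IZR e2 * snd p, IZR e2 * fst p + IZR e1 * snd p).

Ltac caseE HE := destruct HE as [[-> ->]|[[-> ->]|[[-> ->]|[-> ->]]]].

Lemma rot_inv e1 e2 p : E4 e1 e2 -> rotinv e1 e2 (rot e1 e2 p) = p.
Proof. intros HE. destruct p. unfold rot, rotinv; simpl. caseE HE; f_equal; simpl; ring. Qed.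
Lemma inv_rot e1 e2 p : E4 e1 e2 -> rot e1 e2 (rotinv e1 e2 p) = p.
Proof. intros HE. destruct p. unfold rot, rotinv; simpl. caseE HE; f_equal; simpl; ring. Qed.

Lemma rotinv_box e1 e2 x y rho : E4 e1 e2 -> inB x rho y -> inB (rotinv e1 e2 x) rho (rotinv e1 e2 y).
Proof.
  intros HE [H1 H2]. unfold inB, rotinv in *; simpl in *.
  caseE HE; split;
  match goal with |- Rabs ?a < _ => first
    [ replace a with (fst y - fst x) by ring; auto
    | replace a with (snd y - snd x) by ring; auto
    | replace a with (- (fst y - fst x)) by ring; rewrite Rabs_Ropp; auto
    | replace a with (- (snd y - snd x)) by ring; rewrite Rabs_Ropp; auto ] end.
Qed.

Lemma rot_box e1 e2 x y rho : E4 e1 e2 -> inB x rho y -> inB (rot e1 e2 x) rho (rot e1 e2 y).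
Proof.
  intros HE [H1 H2]. unfold inB, rot in *; simpl in *.
  caseE HE; split;
  match goal with |- Rabs ?a < _ => first
    [ replace a with (fst y - fst x) by ring; auto
    | replace a with (snd y - snd x) by ring; auto
    | replace a with (- (fst y - fst x)) by ring; rewrite Rabs_Ropp; auto
    | replace a with (- (snd y - snd x)) by ring; rewrite Rabs_Ropp; auto ] end.
Qed.

Lemma rot_dist e1 e2 p q : E4 e1 e2 -> dist2 (rotinv e1 e2 p) (rotinv e1 e2 q) = dist2 p q.
Proof.
  intros HE. unfold dist2, rotinv; simpl. f_equal. caseE HE; simpl; ring.
Qed.

Section Rot.
Variables (e1 e2 : Z).
Hypothesis HE : E4 e1 e2.
Variable C : pset.
Let C' := fun q => C (rotinv e1 e2 q).

Lemma rotC_closed : closed_set C -> closed_set C'.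
Proof.
  intros Hc q Hq. destruct (Hc _ Hq) as [e [He Hb]]. exists e. split; auto.
  intros q' Hd. unfold C'. apply Hb. rewrite rot_dist; auto.
Qed.

Lemma rotC_convex : convex C -> convex C'.
Proof.
  intros Hv x y t Hx Hy Ht. unfold C' in *.
  apply (convexE C Hv _ _ _ t Hx Hy Ht). unfold rotinv, padd, pscale; simpl. f_equal; ring.
Qed.

Lemma rotC_box g r : Box C g r -> Box C' (rot e1 e2 g) r.
Proof.
  intros [Hr HB]. split; auto. intros y Hy. unfold C'. apply HB.
  rewrite <- (rot_inv e1 e2 g HE). apply rotinv_box; auto.
Qed.

Definition compR (T : unimod) : unimod :=
  {| m11 := e1 * m11 T - e2 * m21 T; m12 := e1 * m12 T - e2 * m22 T;
     m21 := e2 * m11 T + e1 * m21 T; m22 := e2 * m12 T + e1 * m22 T;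
     b1 := IZR e1 * b1 T - IZR e2 * b2 T; b2 := IZR e2 * b1 T + IZR e1 * b2 T |}.

Lemma apply_compR T u : apply_unimod (compR T) u = rotinv e1 e2 (apply_unimod T u).
Proof. unfold apply_unimod, compR, rotinv; simpl. rewrite !minus_IZR, !plus_IZR, !mult_IZR. f_equal; ring. Qed.

Lemma compR_unimod A T : is_unimod A T -> is_unimod A (compR T).
Proof.
  intros [Hd [H1 H2]]. split.
  - simpl. caseE HE; lia.
  - destruct A; simpl in *; auto. destruct H1 as [z1 E1]; destruct H2 as [z2 E2].
    rewrite E1, E2. split.
    exists (e1 * z1 - e2 * z2)%Z. rewrite minus_IZR, !mult_IZR; ring.
    exists (e2 * z1 + e1 * z2)%Z. rewrite plus_IZR, !mult_IZR; ring.
Qed.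

Lemma rotC_free A : freeV A C -> freeV A C'.
Proof.
  intros Hf [T [rho [HT [B0 [B1 B2]]]]]. apply Hf. exists (compR T), rho.
  split. apply compR_unimod; auto.
  assert (Hb : forall u, Box C' (apply_unimod T u) rho -> Box C (apply_unimod (compR T) u) rho).
  { intros u [Hr HB]. split; auto. intros y Hy. rewrite <- (rot_inv e1 e2 y HE).
    apply HB. rewrite apply_compR in Hy.
    rewrite <- (inv_rot e1 e2 (apply_unimod T u) HE). apply rot_box; auto. }
  auto.
Qed.

Lemma rotC_back A T : set_sub C' (image T (strip A)) -> set_sub C (image (compR T) (strip A)).
Proof.
  intros Hs c Hc. assert (Hc' : C' (rot e1 e2 c)) by (unfold C'; rewrite rot_inv; auto).
  destruct (Hs _ Hc') as [u [Hu Eu]]. exists u. split; auto.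
  rewrite apply_compR, <- Eu, rot_inv; auto.
Qed.
End Rot.

Definition cone (C : pset) g e1 e2 R0 := exists p, C p /\
  IZR e1 * (fst p - fst g) + IZR e2 * (snd p - snd g) >= R0 /\
  Rabs (- IZR e2 * (fst p - fst g) + IZR e1 * (snd p - snd g)) <=
    IZR e1 * (fst p - fst g) + IZR e2 * (snd p - snd g).

Lemma cone_FarX C g e1 e2 : E4 e1 e2 -> (forall R0, cone C g e1 e2 R0) ->
  FarX (fun q => C (rotinv e1 e2 q)) (rot e1 e2 g).
Proof.
  intros HE Hc R0. destruct (Hc R0) as [p [Hp [H1 H2]]]. exists (rot e1 e2 p).
  rewrite rot_inv by auto. split; auto. unfold rot; simpl.
  replace (IZR e1 * fst p + IZR e2 * snd p - (IZR e1 * fst g + IZR e2 * snd g))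
    with (IZR e1 * (fst p - fst g) + IZR e2 * (snd p - snd g)) by ring.
  replace (- IZR e2 * fst p + IZR e1 * snd p - (- IZR e2 * fst g + IZR e1 * snd g))
    with (- IZR e2 * (fst p - fst g) + IZR e1 * (snd p - snd g)) by ring.
  auto.
Qed.

Lemma cone_mono C g e1 e2 R1 R2 : R1 <= R2 -> cone C g e1 e2 R2 -> cone C g e1 e2 R1.
Proof. intros H [p [Hp [H1 H2]]]. exists p. repeat split; auto. lra. Qed.

Lemma cone_choice C g : unbounded C ->
  exists e1 e2, E4 e1 e2 /\ forall R0, cone C g e1 e2 R0.
Proof.
  intros Hu.
  assert (Hall : forall R0, cone C g 1 0 R0 \/ cone C g 0 1 R0 \/ cone C g (-1) 0 R0 \/ cone C g 0 (-1) R0).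
  { intros R0. apply NNPP; intro Hn. apply Hu.
    exists (Rabs R0 + Rabs (fst g) + Rabs (snd g)). intros p Hp.
    apply NNPP; intro Hb.
    assert (Hbig : Rabs R0 < Rabs (fst p - fst g) \/ Rabs R0 < Rabs (snd p - snd g)).
    { pose proof (Rabs_triang (fst p - fst g) (fst g)). pose proof (Rabs_triang (snd p - snd g) (snd g)).
      replace (fst p - fst g + fst g) with (fst p) in H by ring.
      replace (snd p - snd g + snd g) with (snd p) in H0 by ring.
      pose proof (Rabs_pos (fst g)); pose proof (Rabs_pos (snd g)).
      destruct (Rle_dec (Rabs (fst p)) (Rabs R0 + Rabs (fst g) + Rabs (snd g))); [|left; lra].
      destruct (Rle_dec (Rabs (snd p)) (Rabs R0 + Rabs (fst g) + Rabs (snd g))); [|right; lra].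
      exfalso; apply Hb; split; auto. }
    pose proof (Rle_abs R0).
    set (dx := fst p - fst g) in *. set (dy := snd p - snd g) in *.
    apply Hn. destruct (Rle_dec (Rabs dy) (Rabs dx)).
    - destruct (Rle_dec 0 dx).
      + left. exists p. split; [exact Hp|].
        assert (E1 : IZR 1 * (fst p - fst g) + IZR 0 * (snd p - snd g) = dx) by (unfold dx; simpl; ring).
        assert (E2 : - IZR 0 * (fst p - fst g) + IZR 1 * (snd p - snd g) = dy) by (unfold dy; simpl; ring).
        rewrite E1, E2. rewrite (Rabs_right dx) in * by lra. lra.
      + right; right; left. exists p. split; [exact Hp|].
        assert (E1 : IZR (-1) * (fst p - fst g) + IZR 0 * (snd p - snd g) = - dx) by (unfold dx; simpl; ring).
        assert (E2 : - IZR 0 * (fst p - fst g) + IZR (-1) * (snd p - snd g) = - dy) by (unfold dy; simpl; ring).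
        rewrite E1, E2, Rabs_Ropp. rewrite (Rabs_left dx) in * by lra. lra.
    - destruct (Rle_dec 0 dy).
      + right; left. exists p. split; [exact Hp|].
        assert (E1 : IZR 0 * (fst p - fst g) + IZR 1 * (snd p - snd g) = dy) by (unfold dy; simpl; ring).
        assert (E2 : - IZR 1 * (fst p - fst g) + IZR 0 * (snd p - snd g) = - dx) by (unfold dx; simpl; ring).
        rewrite E1, E2, Rabs_Ropp. rewrite (Rabs_right dy) in * by lra. lra.
      + right; right; right. exists p. split; [exact Hp|].
        assert (E1 : IZR 0 * (fst p - fst g) + IZR (-1) * (snd p - snd g) = - dy) by (unfold dy; simpl; ring).
        assert (E2 : - IZR (-1) * (fst p - fst g) + IZR 0 * (snd p - snd g) = dx) by (unfold dx; simpl; ring).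
        rewrite E1, E2. rewrite (Rabs_left dy) in * by lra. lra. }
  apply NNPP; intro Hn.
  assert (Hnot : forall e1 e2, E4 e1 e2 -> exists R0, ~ cone C g e1 e2 R0).
  { intros e1 e2 HE. apply NNPP; intro H. apply Hn. exists e1, e2. split; auto.
    intros R0. apply NNPP; intro H'. apply H. exists R0; auto. }
  destruct (Hnot 1 0)%Z as [R1 H1]. left; auto.
  destruct (Hnot 0 1)%Z as [R2 H2]. right; left; auto.
  destruct (Hnot (-1) 0)%Z as [R3 H3]. right; right; left; auto.
  destruct (Hnot 0 (-1))%Z as [R4 H4]. right; right; right; auto.
  set (R := Rmax (Rmax R1 R2) (Rmax R3 R4)).
  pose proof (Rmax_l (Rmax R1 R2) (Rmax R3 R4)). pose proof (Rmax_r (Rmax R1 R2) (Rmax R3 R4)).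
  pose proof (Rmax_l R1 R2). pose proof (Rmax_r R1 R2). pose proof (Rmax_l R3 R4). pose proof (Rmax_r R3 R4).
  fold R in H, H0.
  destruct (Hall R) as [Hc|[Hc|[Hc|Hc]]].
  - apply H1. apply (cone_mono _ _ _ _ R1 R); auto. lra.
  - apply H2. apply (cone_mono _ _ _ _ R2 R); auto. lra.
  - apply H3. apply (cone_mono _ _ _ _ R3 R); auto. lra.
  - apply H4. apply (cone_mono _ _ _ _ R4 R); auto. lra.
Qed.

Lemma tri_box (C : pset) a b c : convex C -> C a -> C b -> C c ->
  (fst b - fst a) * (snd c - snd a) - (snd b - snd a) * (fst c - fst a) <> 0 ->
  exists g r, Box C g r.
Proof.
  intros Hv Ha Hb Hc HD.
  set (D := (fst b - fst a) * (snd c - snd a) - (snd b - snd a) * (fst c - fst a)) in *.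
  set (K := Rabs (fst b - fst a) + Rabs (snd b - snd a) + Rabs (fst c - fst a) + Rabs (snd c - snd a) + 1).
  assert (HK : 1 <= K) by (unfold K; pose proof (Rabs_pos (fst b - fst a)); pose proof (Rabs_pos (snd b - snd a));
    pose proof (Rabs_pos (fst c - fst a)); pose proof (Rabs_pos (snd c - snd a)); lra).
  assert (HDp : 0 < Rabs D) by (apply Rabs_pos_lt; auto).
  set (g := ((fst a + fst b + fst c)/3, (snd a + snd b + snd c)/3)).
  exists g, (Rabs D / (12 * K)). split. apply Rdiv_lt_0_compat; lra.
  intros y [Hy1 Hy2].
  set (s := ((fst y - fst a) * (snd c - snd a) - (snd y - snd a) * (fst c - fst a)) / D).
  set (t := ((fst b - fst a) * (snd y - snd a) - (snd b - snd a) * (fst y - fst a)) / D).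
  assert (Es : s - 1/3 = ((snd c - snd a) * (fst y - fst g) + (- (fst c - fst a)) * (snd y - snd g)) / D).
  { unfold s, g, D; simpl. field. exact HD. }
  assert (Et : t - 1/3 = ((- (snd b - snd a)) * (fst y - fst g) + (fst b - fst a) * (snd y - snd g)) / D).
  { unfold t, g, D; simpl. field. exact HD. }
  assert (Hsum : Rabs (fst y - fst g) + Rabs (snd y - snd g) < 2 * (Rabs D / (12 * K))) by lra.
  assert (Hbound : forall u v, Rabs u + Rabs v <= K ->
     Rabs ((u * (fst y - fst g) + v * (snd y - snd g)) / D) < 1/6).
  { intros u v Huv. unfold Rdiv. rewrite Rabs_mult, Rabs_inv.
    apply Rmult_lt_reg_r with (Rabs D). auto. rewrite Rmult_assoc, Rinv_l by lra. rewrite Rmult_1_r.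
    eapply Rle_lt_trans. apply abs_lin.
    pose proof (Rabs_pos (fst y - fst g)); pose proof (Rabs_pos (snd y - snd g)).
    pose proof (Rabs_pos u); pose proof (Rabs_pos v).
    apply Rle_lt_trans with (K * (Rabs (fst y - fst g) + Rabs (snd y - snd g))).
    apply Rmult_le_compat_r; lra.
    apply Rlt_le_trans with (K * (2 * (Rabs D / (12 * K)))).
    apply Rmult_lt_compat_l; lra.
    replace (K * (2 * (Rabs D / (12 * K)))) with (Rabs D / 6) by (field; lra). lra. }
  assert (Hs : Rabs (s - 1/3) < 1/6).
  { rewrite Es. apply Hbound. rewrite Rabs_Ropp. unfold K.
    pose proof (Rabs_pos (fst b - fst a)); pose proof (Rabs_pos (snd b - snd a)); lra. }
  assert (Ht : Rabs (t - 1/3) < 1/6).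
  { rewrite Et. apply Hbound. rewrite Rabs_Ropp. unfold K.
    pose proof (Rabs_pos (fst c - fst a)); pose proof (Rabs_pos (snd c - snd a)); lra. }
  apply Rabs_def2 in Hs. apply Rabs_def2 in Ht.
  replace y with ((1 - s - t) * fst a + s * fst b + t * fst c, (1 - s - t) * snd a + s * snd b + t * snd c).
  apply conv3; auto; lra.
  destruct y as [y1 y2]. unfold s, t, D; simpl. f_equal; field; auto.
Qed.

Lemma set_eq_eq (X Y : pset) : set_eq X Y -> X = Y.
Proof. intros H. apply functional_extensionality. intros p. apply propositional_extensionality. auto. Qed.

Lemma forward A C : closed_convex C -> two_dim C -> unbounded C -> maximal_free A Delta2 C ->
  exists T, is_unimod A T /\ set_eq C (image T (strip A)).
Proof.
  intros [Hc Hv] [a [b [c [Ha [Hb [Hcc Hd]]]]]] Hu [_ [Hfree Hmax]].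
  pose proof (free_freeV A C Hv Hfree) as Hf.
  destruct (tri_box C a b c Hv Ha Hb Hcc Hd) as [g [r HB]].
  destruct (cone_choice C g Hu) as [e1 [e2 [HE Hcone]]].
  destruct (core A (fun q => C (rotinv e1 e2 q)) (rot e1 e2 g) r) as [T [HT Hsub]].
  - apply rotC_closed; auto.
  - apply rotC_convex; auto.
  - apply rotC_box; auto.
  - apply cone_FarX; auto.
  - apply rotC_free; auto.
  - exists (compR e1 e2 T). assert (HT' : is_unimod A (compR e1 e2 T)) by (apply compR_unimod; auto).
    split; auto.
    pose proof (rotC_back e1 e2 HE C A T Hsub) as Hs.
    assert (Hs2 : set_sub (image (compR e1 e2 T) (strip A)) C).
    { apply Hmax; auto. split. apply L_closed; auto. apply L_convex; auto. apply L_free; auto. }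
    intros p; split; auto.
Qed.

Theorem proposition3p3 (A : coeffs) :
  (forall C : pset,
     (closed_convex C /\ two_dim C /\ unbounded C /\ maximal_free A Delta2 C)
     <-> exists T, is_unimod A T /\ set_eq C (image T (strip A)))
  /\
  (forall C : pset,
     closed_convex C /\ two_dim C /\ unbounded C /\ maximal_free A Delta2 C ->
     lattice_width C = Finite (strip_width A)).
Proof.
  split.
  - intros C. split.
    + intros [H1 [H2 [H3 H4]]]. apply forward; auto.
    + intros [T [HT HC]]. apply set_eq_eq in HC. subst C.
      split. split. apply L_closed; auto. apply L_convex; auto.
      split. apply L_two_dim; auto. split. apply L_unbounded; auto.
      split. split. apply L_closed; auto. apply L_convex; auto.
      split. apply L_free; auto. apply L_max; auto.
  - intros C [H1 [H2 [H3 H4]]]. destruct (forward A C H1 H2 H3 H4) as [T [HT HC]].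
    apply set_eq_eq in HC. subst C. apply L_width; auto.
Qed.
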